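(* Let $G$ be a nilpotent $p$-group ($p$ prime) whose first Ulm factor has bounded period. Then every $p$-nonsingular system of equations over $G$ has a solution in $G$.
   Context: For a nilpotent $p$-group $G$, the height of $g\in G$ is the greatest $n$ with $g=h^{p^n}$ for some $h\in G$; if no greatest such $n$ exists, $g$ has infinite height. The elements of infinite height form a normal subgroup $G_0$, and $G/G_0$ is the first Ulm factor. Bounded period means some $n\ge1$ satisfies $x^n=1$ for all elements $x$. An equation over $G$ in variables $\{x_j\}$ is $w=1$ with $w\in G*F(\{x_j\})$, $F$ free on the $x_j$; systems may be infinite, in infinitely many variables; a solution in $G$ is an assignment $x_j\mapsto g_j\in G$ making all equations hold. The system is $p$-nonsingular if the rows of exponent sums of the variables in the equations are linearly independent over the field of order $p$ (every finite subset of rows is linearly independent). *)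

(* Defs.v *)
From Stdlib Require Import ZArith List Znumtheory ClassicalEpsilon.
Import ListNotations.
Open Scope Z_scope.

Record Group := {
  carrier :> Type;
  gmul : carrier -> carrier -> carrier;
  gone : carrier;
  ginv : carrier -> carrier;
  gmulA : forall x y z, gmul x (gmul y z) = gmul (gmul x y) z;
  gmul1 : forall x, gmul gone x = x;
  gmulV : forall x, gmul (ginv x) x = gone
}.

Arguments gmul {g} _ _.
Arguments gone {g}.
Arguments ginv {g} _.

Fixpoint gpow {G : Group} (x : G) (n : nat) : G :=
  match n with O => gone | S k => gmul x (gpow x k) end.

Definition gcomm {G : Group} (a b : G) : G :=
  gmul (gmul (ginv a) (ginv b)) (gmul a b).

(* nilpotent: for some c, all left-normed commutators [x0,x1,...,xc] of
   weight c+1 are trivial (i.e. gamma_{c+1}(G) = 1). *)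
Definition nilpotent (G : Group) : Prop :=
  exists c : nat, forall (x : G) (xs : list G),
    length xs = c -> fold_left gcomm xs x = gone.

Definition p_group (p : nat) (G : Group) : Prop :=
  forall x : G, exists n : nat, gpow x (Nat.pow p n) = gone.

Definition height_ge (p : nat) {G : Group} (g : G) (n : nat) : Prop :=
  exists h : G, gpow h (Nat.pow p n) = g.

Definition infinite_height (p : nat) {G : Group} (g : G) : Prop :=
  ~ exists n, height_ge p g n /\ forall m, height_ge p g m -> (m <= n)%nat.

(* G/G_0 has bounded period: some m >= 1 with x^m in G_0 for all x *)
Definition first_Ulm_factor_bounded (p : nat) (G : Group) : Prop :=
  exists m : nat, (1 <= m)%nat /\ forall x : G, infinite_height p (gpow x m).

(* Words representing elements of G * F({x_j : j in J}):
   a constant of G, or x_j (true) / x_j^-1 (false). *)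
Inductive letter (G : Group) (J : Type) : Type :=
  | Const : carrier G -> letter G J
  | Var : J -> bool -> letter G J.
Arguments Const {G J} _.
Arguments Var {G J} _ _.

Definition word (G : Group) (J : Type) := list (letter G J).

Definition eval_letter {G : Group} {J : Type} (a : J -> G) (l : letter G J) : G :=
  match l with
  | Const g => g
  | Var j true => a j
  | Var j false => ginv (a j)
  end.

Definition eval_word {G : Group} {J : Type} (a : J -> G) (w : word G J) : G :=
  fold_right (fun l acc => gmul (eval_letter a l) acc) gone w.

Definition letter_exp {G : Group} {J : Type} (j : J) (l : letter G J) : Z :=
  match l with
  | Const _ => 0
  | Var k b =>
      if excluded_middle_informative (k = j) then (if b then 1 else -1) else 0
  end.

Definition exp_sum {G : Group} {J : Type} (w : word G J) (j : J) : Z :=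
  fold_right (fun l acc => letter_exp j l + acc) 0 w.

(* The system {w i = 1 : i in I} is p-nonsingular: every finite set of
   exponent-sum rows is linearly independent over F_p. *)
Definition p_nonsingular (p : nat) {G : Group} {I J : Type}
    (w : I -> word G J) : Prop :=
  forall (s : list I) (c : I -> Z), NoDup s ->
    (forall j : J, (Z.of_nat p | fold_right (fun i acc => c i * exp_sum (w i) j + acc) 0 s)) ->
    forall i, In i s -> (Z.of_nat p | c i).

Definition has_solution {G : Group} {I J : Type} (w : I -> word G J) : Prop :=
  exists a : J -> G, forall i : I, eval_word a (w i) = gone.

(* Main.v *)
Require Import Defs.
From Stdlib Require Import ZArith List Znumtheory.
From Stdlib Require Import Lia ClassicalEpsilon Classical FunctionalExtensionality PropExtensionality ProofIrrelevance.
From mathcomp Require classical_sets.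
Import ListNotations.

Module PZorn.

Lemma zorn_sets (T : Type) (P : (T -> Prop) -> Prop) :
  (forall F : (T -> Prop) -> Prop, (forall X, F X -> P X) ->
     (forall X Y, F X -> F Y -> (forall t, X t -> Y t) \/ (forall t, Y t -> X t)) ->
     P (fun a => exists2 X, F X & X a)) ->
  exists A, P A /\ forall B, (forall t, A t -> B t) -> ~ (forall t, B t -> A t) -> ~ P B.
Proof.
  intros H. destruct (@classical_sets.Zorn_bigcup T P) as [A [HA HB]].
  - intros F H1 H2. exact (H F H1 H2).
  - exists A. split; [exact HA|]. intros B h1 h2. apply HB. split; assumption.
Qed.

End PZorn.

Module PA.


Section G.
Variable G : Group.
Local Notation "x * y" := (@gmul G x y).
Local Notation "1" := (@gone G).
Local Notation "x ^-1" := (@ginv G x) (at level 2).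

Lemma gmulA' (x y z : G) : (x * y) * z = x * (y * z).
Proof. now rewrite gmulA. Qed.
Lemma gmul1l (x : G) : 1 * x = x. Proof. apply gmul1. Qed.
Lemma gmulVl (x : G) : x^-1 * x = 1. Proof. apply gmulV. Qed.
Lemma gmulKl (x y : G) : x^-1 * (x * y) = y.
Proof. now rewrite gmulA, gmulV, gmul1. Qed.
Lemma gmulVr (x : G) : x * x^-1 = 1.
Proof.
  rewrite <- (gmul1 G (x * x^-1)). rewrite <- (gmulV G (x^-1)) at 1.
  rewrite <- gmulA. rewrite (gmulA _ (x^-1) x). rewrite gmulV, gmul1. apply gmulV.
Qed.
Lemma gmul1r (x : G) : x * 1 = x.
Proof. rewrite <- (gmulV G x), gmulA, gmulVr, gmul1. reflexivity. Qed.
Lemma ginvK (x : G) : (x^-1)^-1 = x.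
Proof.
  rewrite <- (gmul1r ((x^-1)^-1)). rewrite <- (gmulV G x). rewrite gmulA, gmulV, gmul1. reflexivity.
Qed.
Lemma gmulKr (x y : G) : x * (x^-1 * y) = y.
Proof. now rewrite gmulA, gmulVr, gmul1. Qed.
Lemma gmul_cancel_l (x y z : G) : x * y = x * z -> y = z.
Proof. intros H. rewrite <- (gmulKl x y), H, gmulKl. reflexivity. Qed.
Lemma ginv_mul (x y : G) : (x * y)^-1 = y^-1 * x^-1.
Proof.
  apply (gmul_cancel_l (x * y)). rewrite gmulVr.
  rewrite gmulA'. rewrite gmulKr. rewrite gmulVr. reflexivity.
Qed.
Lemma ginv1 : (1 : G)^-1 = 1.
Proof. rewrite <- (gmul1r (1^-1)). apply gmulV. Qed.
Lemma gmulKl' (x y : G) : x * (x^-1 * y) = y. Proof. apply gmulKr. Qed.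
Lemma gmulKr' (x y : G) : x^-1 * (x * y) = y. Proof. apply gmulKl. Qed.
End G.

Ltac gsimpl := repeat (rewrite ?gmulA', ?gmul1l, ?gmul1r, ?gmulVl, ?gmulVr, ?gmulKl, ?gmulKr,
    ?ginv_mul, ?ginvK, ?ginv1).
Ltac gsolve := gsimpl; reflexivity.

Section G2.
Variable G : Group.
Local Notation "x * y" := (@gmul G x y).
Local Notation "1" := (@gone G).
Local Notation "x ^-1" := (@ginv G x) (at level 2).

Lemma gpow_add (x : G) m n : gpow x (m + n) = gpow x m * gpow x n.
Proof. induction m; simpl. - now rewrite gmul1l. - rewrite IHm. gsolve. Qed.
Lemma gpow_S' (x : G) n : gpow x (S n) = gpow x n * x.
Proof. replace (S n) with (n + 1)%nat by lia. rewrite gpow_add. simpl. now rewrite gmul1r. Qed.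
Lemma gpow_mul (x : G) m n : gpow x (m * n) = gpow (gpow x m) n.
Proof.
  induction n; simpl.
  - now rewrite Nat.mul_0_r.
  - rewrite Nat.mul_succ_r, gpow_add, IHn.
    rewrite <- gpow_S'. simpl. reflexivity.
Qed.
Lemma gpow_comm_self (x : G) m n : gpow x m * gpow x n = gpow x n * gpow x m.
Proof. rewrite <- !gpow_add. now rewrite Nat.add_comm. Qed.
Lemma gpow1 (n : nat) : gpow (1 : G) n = 1.
Proof. induction n; simpl; auto. rewrite IHn. apply gmul1l. Qed.
Lemma gpow_one (x : G) : gpow x 1 = x.
Proof. simpl. apply gmul1r. Qed.
Lemma gpow_inv (x : G) n : gpow (x^-1) n = (gpow x n)^-1.
Proof.
  induction n; simpl. - now rewrite ginv1.
  - rewrite IHn. change (x * gpow x n) with (gpow x (S n)). rewrite gpow_S', ginv_mul. reflexivity.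
Qed.
Lemma gpow_comm_mul (x y : G) n : x * y = y * x -> gpow (x * y) n = gpow x n * gpow y n.
Proof.
  intros H. induction n; simpl. - now rewrite gmul1l.
  - rewrite IHn.
    assert (Hc : forall k, y * gpow x k = gpow x k * y).
    { induction k; simpl. - now rewrite gmul1l, gmul1r.
      - rewrite gmulA, <- H, gmulA', IHk. gsolve. }
    rewrite !gmulA'. f_equal. rewrite !gmulA. f_equal. apply Hc.
Qed.
Definition conj (h x : G) : G := h^-1 * (x * h).
Lemma conj_mul h x y : conj h (x * y) = conj h x * conj h y.
Proof. unfold conj. gsolve. Qed.
Lemma conj_inv h x : conj h (x^-1) = (conj h x)^-1.
Proof. unfold conj. gsolve. Qed.
Lemma conj_pow h x n : conj h (gpow x n) = gpow (conj h x) n.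
Proof. induction n; simpl. - unfold conj. gsolve. - rewrite conj_mul, IHn. reflexivity. Qed.
End G2.

End PA.

Module PB.
Import PA.

Section B.
Variable G : Group.
Local Notation "x * y" := (@gmul G x y).
Local Notation "1" := (@gone G).
Local Notation "x ^-1" := (@ginv G x) (at level 2).

Definition nsub (N : G -> Prop) :=
  N 1 /\ (forall x y, N x -> N y -> N (x*y)) /\ (forall x, N x -> N x^-1) /\
  (forall h x, N x -> N (conj G h x)).
Definition cong (N : G -> Prop) x y := N (x^-1 * y).

Section N.
Variable N : G -> Prop.
Hypothesis HN : nsub N.
Lemma N1 : N 1. Proof. apply HN. Qed.
Lemma NM x y : N x -> N y -> N (x*y). Proof. apply HN. Qed.
Lemma NV x : N x -> N x^-1. Proof. apply HN. Qed.
Lemma NC h x : N x -> N (conj G h x). Proof. apply HN. Qed.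
Lemma N_eq x y : x = y -> N x -> N y. Proof. intros ->; auto. Qed.
Lemma NV' x : N x^-1 -> N x. Proof. intros H. apply NV in H. now rewrite ginvK in H. Qed.

Lemma cong_refl x : cong N x x. Proof. unfold cong. rewrite gmulVl. apply N1. Qed.
Lemma cong_sym x y : cong N x y -> cong N y x.
Proof. unfold cong. intros H. apply NV in H. revert H. apply N_eq. gsolve. Qed.
Lemma cong_trans x y z : cong N x y -> cong N y z -> cong N x z.
Proof. unfold cong. intros H1 H2. generalize (NM _ _ H1 H2). apply N_eq. gsolve. Qed.
Lemma cong_mul x x' y y' : cong N x x' -> cong N y y' -> cong N (x*y) (x'*y').
Proof.
  unfold cong. intros H1 H2. generalize (NM _ _ (NC y _ H1) H2). apply N_eq.
  unfold conj. gsolve.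
Qed.
Lemma cong_inv x x' : cong N x x' -> cong N x^-1 x'^-1.
Proof.
  unfold cong. intros H. generalize (NC (x'^-1) _ (NV _ H)). apply N_eq. unfold conj. gsolve.
Qed.
Lemma cong_pow x x' n : cong N x x' -> cong N (gpow x n) (gpow x' n).
Proof. intros H; induction n; simpl. apply cong_refl. now apply cong_mul. Qed.
Lemma cong_N x y : cong N x y -> N y -> N x.
Proof.
  unfold cong. intros H1 H2. apply NV'. generalize (NM _ _ H1 (NV _ H2)). apply N_eq. gsolve.
Qed.
Lemma cong_1 x : cong N 1 x <-> N x.
Proof. unfold cong. rewrite ginv1, gmul1l. tauto. Qed.
Lemma cong_eq x y : x = y -> cong N x y. Proof. intros ->. apply cong_refl. Qed.

Definition cen (M : G -> Prop) z := forall g, cong M (g * z) (z * g).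

Lemma cen_conj z v : cen N z -> cong N (conj G v z) z.
Proof.
  intros H. specialize (H v). unfold cong in *. apply NV in H.
  revert H. apply N_eq. unfold conj. gsolve.
Qed.
Lemma cen_pow z y n : cen N z -> cong N (gpow (y * z) n) (gpow y n * gpow z n).
Proof.
  intros Hz. induction n; simpl.
  - apply cong_eq. gsolve.
  - apply cong_trans with ((y * z) * (gpow y n * gpow z n)).
    + apply cong_mul. apply cong_refl. exact IHn.
    + apply cong_trans with (y * ((z * gpow y n) * gpow z n)).
      * apply cong_eq. gsolve.
      * apply cong_trans with (y * ((gpow y n * z) * gpow z n)).
        -- apply cong_mul. apply cong_refl. apply cong_mul. apply cong_sym. apply Hz. apply cong_refl.
        -- apply cong_eq. gsolve.
Qed.
Lemma cen_conj_pow u y z i : cen N z -> conj G u y = y * z ->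
  cong N (conj G (gpow u i) y) (y * gpow z i).
Proof.
  intros Hz Hu. induction i; simpl.
  - apply cong_eq. unfold conj. gsolve.
  - apply cong_trans with (conj G (gpow u i) (conj G u y)).
    + apply cong_eq. unfold conj. gsolve.
    + rewrite Hu, conj_mul.
      apply cong_trans with ((y * gpow z i) * z).
      * apply cong_mul. exact IHi. apply cen_conj. exact Hz.
      * apply cong_eq. change (z * gpow z i) with (gpow z (S i)). rewrite gpow_S'. gsolve.
Qed.
End N.

Fixpoint Yser (N : G -> Prop) (k : nat) (x : G) : Prop :=
  match k with
  | O => N x
  | S k => forall y, Yser N k (gcomm x y)
  end.

Lemma Yser_nsub N k : nsub N -> nsub (Yser N k).
Proof.
  intros HN. induction k as [|k IH]; simpl; auto.
  split; [|split; [|split]].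
  - intros y. apply (N_eq _ 1). unfold gcomm. gsolve. apply N1, IH.
  - intros x x' Hx Hx' g. specialize (Hx g). specialize (Hx' g).
    generalize (NM _ IH _ _ (NC _ IH x' _ Hx) Hx'). apply N_eq. unfold conj, gcomm. gsolve.
  - intros x Hx g. specialize (Hx g).
    generalize (NC _ IH (x^-1) _ (NV _ IH _ Hx)). apply N_eq. unfold conj, gcomm. gsolve.
  - intros h x Hx g. specialize (Hx (h * (g * h^-1))).
    generalize (NC _ IH h _ Hx). apply N_eq. unfold conj, gcomm. gsolve.
Qed.

Lemma Yser_S N k x : nsub N -> Yser N k x -> Yser N (S k) x.
Proof.
  intros HN. revert x. induction k as [|k IH]; simpl; intros x Hx.
  - intros y. unfold gcomm. generalize (NM _ HN _ _ (NV _ HN _ Hx) (NC _ HN y _ Hx)).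
    apply N_eq. unfold conj. gsolve.
  - intros y. apply IH. apply Hx.
Qed.
Lemma Yser_0 N k x : nsub N -> N x -> Yser N k x.
Proof. intros HN Hx. induction k. exact Hx. now apply Yser_S. Qed.

Lemma Yser_fold N k : forall x, (forall ys, length ys = k -> N (fold_left gcomm ys x)) -> Yser N k x.
Proof.
  induction k as [|k IH]; simpl; intros x H.
  - apply (H []). reflexivity.
  - intros y. apply IH. intros ys Hl. apply (H (y :: ys)). simpl. now rewrite Hl.
Qed.

Lemma Yser_cen N k x : Yser N (S k) x -> cen (Yser N k) x.
Proof.
  intros H g. specialize (H g). unfold cong. revert H. apply N_eq with (N := Yser N k). unfold gcomm. gsolve.
Qed.

Definition triv (x : G) : Prop := x = 1.
Lemma triv_nsub : nsub triv.
Proof.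
  unfold nsub, triv. split; [reflexivity|split; [|split]].
  - intros x y -> ->. apply gmul1l.
  - intros x ->. apply ginv1.
  - intros h x ->. unfold conj. gsolve.
Qed.

Lemma nil_comm_pow c : (forall x, Yser triv c x) ->
  forall n (x y : G), gpow y n = 1 -> gcomm (gpow x (Nat.pow n c)) y = 1.
Proof.
  intros Hc n.
  assert (Hk : forall t, (t <= c)%nat -> forall x y, gpow y n = 1 ->
            Yser triv (c - t) (gcomm (gpow x (Nat.pow n t)) y)).
  { induction t as [|t IH]; intros Ht x y Hy.
    - rewrite Nat.sub_0_r. apply Hc.
    - set (k := (c - S t)%nat).
      assert (Ek : (c - t = S k)%nat) by (unfold k; lia).
      pose proof (IH ltac:(lia) x y Hy) as H1. rewrite Ek in H1.
      set (u := gpow x (Nat.pow n t)) in *.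
      assert (HM : nsub (Yser triv k)) by (apply Yser_nsub, triv_nsub).
      set (z := gcomm y u).
      assert (Hz1 : Yser triv (S k) z).
      { apply (N_eq _ (gcomm u y)^-1). unfold z, gcomm. gsolve. apply (NV _ (Yser_nsub triv (S k) triv_nsub)). exact H1. }
      assert (Hz : cen (Yser triv k) z) by (apply Yser_cen; exact Hz1).
      assert (Hu : conj G u y = y * z) by (unfold z, conj, gcomm; gsolve).
      assert (Hzn : Yser triv k (gpow z n)).
      { apply cong_1. apply (cong_trans _ HM) with (gpow (y * z) n).
        - apply (cong_eq _ HM). rewrite <- Hu, <- conj_pow, Hy. unfold conj. gsolve.
        - apply (cong_trans _ HM) with (gpow y n * gpow z n). apply cen_pow; auto.
          rewrite Hy. apply (cong_eq _ HM). gsolve. }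
      pose proof (cen_conj_pow _ HM u y z n Hz Hu) as H2.
      assert (H3 : cong (Yser triv k) (conj G (gpow u n) y) y).
      { apply (cong_trans _ HM) with (y * gpow z n). exact H2. unfold cong.
        apply (N_eq _ (gpow z n)^-1). gsolve. apply (NV _ HM). exact Hzn. }
      unfold cong in H3. revert H3. apply N_eq.
      unfold u. rewrite <- gpow_mul, Nat.pow_succ_r'. rewrite Nat.mul_comm.
      unfold conj, gcomm. gsolve. }
  intros x y Hy. pose proof (Hk c (le_n c) x y Hy) as H. rewrite Nat.sub_diag in H. exact H.
Qed.
End B.

End PB.

Module PC.
Import PA PB.

Lemma prime_gt1 p : prime (Z.of_nat p) -> (1 < p)%nat.
Proof. intros H. destruct H as [H _]. lia. Qed.

Lemma rel_prime_pow (u : Z) (p : nat) e : rel_prime u (Z.of_nat p) -> rel_prime u (Z.of_nat (Nat.pow p e)).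
Proof.
  intros H. induction e; simpl.
  - apply rel_prime_sym, rel_prime_1.
  - rewrite Nat2Z.inj_mul. apply rel_prime_mult; auto.
Qed.

Lemma NT1 (p u e : nat) : prime (Z.of_nat p) -> ~ (Z.of_nat p | Z.of_nat u) ->
  exists u' t : nat, (u * u' = 1 + t * Nat.pow p e)%nat.
Proof.
  intros Hp Hu. pose proof (prime_gt1 _ Hp) as Hp1.
  destruct e as [|e].
  - destruct u as [|u]. { exfalso. apply Hu. exists 0%Z. lia. }
    exists 1%nat, u. simpl. lia.
  - assert (HP : (2 <= Nat.pow p (S e))%nat).
    { simpl. assert (1 <= Nat.pow p e)%nat by (apply Nat.neq_0_lt_0, Nat.pow_nonzero; lia). nia. }
    set (Pn := Nat.pow p (S e)) in *.
    assert (Hr : rel_prime (Z.of_nat u) (Z.of_nat Pn)).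
    { apply rel_prime_pow. apply rel_prime_sym. apply prime_rel_prime; auto. }
    destruct (rel_prime_bezout _ _ Hr) as [a b Hab].
    set (P := Z.of_nat Pn) in *.
    assert (HPpos : (2 <= P)%Z) by (unfold P; lia).
    pose proof (Z.div_mod a P ltac:(lia)) as Hd.
    pose proof (Z.mod_pos_bound a P ltac:(lia)) as Hb.
    set (r := (a mod P)%Z) in *. set (qq := (a / P)%Z) in *.
    assert (Hur : (Z.of_nat u * r = 1 + P * (- b - Z.of_nat u * qq))%Z) by nia.
    assert (HT : (0 <= - b - Z.of_nat u * qq)%Z) by nia.
    exists (Z.to_nat r), (Z.to_nat (- b - Z.of_nat u * qq)).
    apply Nat2Z.inj. rewrite Nat2Z.inj_mul, Nat2Z.inj_add, Nat2Z.inj_mul.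
    rewrite !Z2Nat.id by lia. fold P. lia.
Qed.

Lemma decomp_p (p : nat) : (1 < p)%nat -> forall k, (0 < k)%nat ->
  exists s u, k = (Nat.pow p s * u)%nat /\ ~ (Z.of_nat p | Z.of_nat u).
Proof.
  intros Hp k. induction k as [k IH] using (well_founded_induction lt_wf). intros Hk.
  destruct (classic (Z.of_nat p | Z.of_nat k)) as [[z Hz]|Hn].
  - assert (Hz0 : (0 < z)%Z) by nia.
    destruct (IH (Z.to_nat z) ltac:(nia) ltac:(lia)) as [s [u [E Hu]]].
    exists (S s), u. split; auto. simpl. apply Nat2Z.inj. rewrite !Nat2Z.inj_mul.
    apply (f_equal Z.of_nat) in E. rewrite Nat2Z.inj_mul, Z2Nat.id in E by lia. rewrite Hz, E. ring.
  - exists 0%nat, k. simpl. split; [lia|auto].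
Qed.

Section G0.
Variable p : nat.
Variable G : Group.
Hypothesis Hp : prime (Z.of_nat p).
Hypothesis Hpg : p_group p G.
Local Notation "x * y" := (@gmul G x y).
Local Notation "1" := (@gone G).
Local Notation "x ^-1" := (@ginv G x) (at level 2).

Definition H0 (x : G) := forall n, height_ge p x n.

Lemma height_down (x : G) n m : (m <= n)%nat -> height_ge p x n -> height_ge p x m.
Proof.
  intros Hmn [h Hh]. exists (gpow h (Nat.pow p (n - m))). rewrite <- gpow_mul, <- Nat.pow_add_r.
  now replace (n - m + m)%nat with n by lia.
Qed.

Lemma inf_H0 (x : G) : infinite_height p x <-> H0 x.
Proof.
  split.
  - intros H n. apply NNPP. intros Hn. apply H.
    assert (Hgen : forall k, (k <= n)%nat -> height_ge p x k ->
      exists m, height_ge p x m /\ forall m', height_ge p x m' -> (m' <= m)%nat).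
    { intros k. induction k as [k IH] using (well_founded_induction (well_founded_ltof _ (fun k => n - k)%nat)).
      intros Hk Hhk. destruct (classic (exists m', height_ge p x m' /\ (k < m')%nat)) as [[m' [Hm' Hkm]]|Hno].
      - assert (m' < n)%nat. { destruct (Nat.lt_ge_cases m' n); auto. exfalso. apply Hn. apply (height_down _ m'); auto. }
        apply (IH m'); unfold ltof; try lia; auto.
      - exists k. split; auto. intros m' Hm'. destruct (Nat.le_gt_cases m' k); auto. exfalso. eauto. }
    apply (Hgen 0%nat). lia. exists x. simpl. apply gmul1r.
  - intros H [n [_ Hn]]. specialize (Hn (S n) (H (S n))). lia.
Qed.

Lemma H0_pow (x : G) k : H0 x -> H0 (gpow x k).
Proof.
  intros H n. destruct (H n) as [h Hh]. exists (gpow h k).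
  rewrite <- !gpow_mul, Nat.mul_comm, gpow_mul, Hh. reflexivity.
Qed.

Lemma H0_root (x : G) k : H0 x -> (0 < k)%nat -> exists g, gpow g k = x.
Proof.
  intros Hx Hk. destruct (decomp_p p (prime_gt1 _ Hp) k Hk) as [s [u [E Hu]]].
  destruct (Hx s) as [h Hh]. destruct (Hpg h) as [e He].
  destruct (NT1 p u e Hp Hu) as [u' [t Ht]].
  exists (gpow h u'). rewrite <- gpow_mul, E.
  replace (u' * (Nat.pow p s * u))%nat with (Nat.pow p s + Nat.pow p e * (t * Nat.pow p s))%nat by nia.
  rewrite gpow_add, gpow_mul, He, gpow1, gmul1r. exact Hh.
Qed.

Variable c : nat.
Hypothesis Hnil : forall x : G, Yser G (triv G) c x.

Lemma H0_central (x : G) : H0 x -> forall y, x * y = y * x.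
Proof.
  intros Hx y. destruct (Hpg y) as [e He].
  destruct (Hx (e * c)%nat) as [h Hh].
  pose proof (nil_comm_pow G c Hnil (Nat.pow p e) h y He) as H.
  rewrite <- Nat.pow_mul_r, Hh in H. unfold gcomm in H.
  apply (gmul_cancel_l G (x^-1 * y^-1)). rewrite H. gsolve.
Qed.

Variable m : nat.
Hypothesis Hm1 : (1 <= m)%nat.
Hypothesis Hm : forall x : G, H0 (gpow x m).

Lemma H0_div (x : G) d : H0 x -> (0 < d)%nat -> exists y, H0 y /\ gpow y d = x.
Proof.
  intros Hx Hd. destruct (H0_root x (m * d) Hx ltac:(nia)) as [g Hg].
  exists (gpow g m). split; auto. now rewrite <- gpow_mul.
Qed.

Lemma H0_nsub : nsub G H0.
Proof.
  split; [|split; [|split]].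
  - intros n. exists 1. apply gpow1.
  - intros x y Hx Hy n.
    assert (Hpn : (0 < Nat.pow p n)%nat) by (apply Nat.neq_0_lt_0, Nat.pow_nonzero; pose proof (prime_gt1 _ Hp); lia).
    destruct (H0_div x _ Hx Hpn) as [a [Ha Ea]]. destruct (H0_div y _ Hy Hpn) as [b [Hb Eb]].
    exists (a * b). rewrite gpow_comm_mul by (apply H0_central; auto). now rewrite Ea, Eb.
  - intros x Hx n. destruct (Hx n) as [h Hh]. exists (h^-1). now rewrite gpow_inv, Hh.
  - intros h x Hx. unfold conj. rewrite (H0_central x Hx h). gsimpl. exact Hx.
Qed.

Lemma H0_ppow : exists v, forall x : G, H0 (gpow x (Nat.pow p v)).
Proof.
  destruct (decomp_p p (prime_gt1 _ Hp) m ltac:(lia)) as [v [u [E Hu]]].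
  exists v. intros x. destruct (Hpg x) as [e He].
  destruct (NT1 p u e Hp Hu) as [u' [t Ht]].
  assert (Hx : gpow x (Nat.pow p v) = gpow (gpow x m) u').
  { rewrite <- gpow_mul, E.
    replace (Nat.pow p v * u * u')%nat with (Nat.pow p v + Nat.pow p e * (t * Nat.pow p v))%nat by nia.
    rewrite gpow_add, gpow_mul, He, gpow1, gmul1r. reflexivity. }
  rewrite Hx. apply H0_pow, Hm.
Qed.
End G0.

End PC.

Module PD.

Open Scope Z_scope.

Record AbG := {
  acar :> Type;
  aadd : acar -> acar -> acar;
  azero : acar;
  aopp : acar -> acar;
  aaddA : forall x y z, aadd x (aadd y z) = aadd (aadd x y) z;
  aaddC : forall x y, aadd x y = aadd y x;
  aadd0 : forall x, aadd azero x = x;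
  aaddN : forall x, aadd (aopp x) x = azero
}.
Arguments aadd {a} _ _.
Arguments azero {a}.
Arguments aopp {a} _.
Arguments aaddA {a} x y z.
Arguments aaddC {a} x y.
Arguments aadd0 {a} x.
Arguments aaddN {a} x.

Section Ab.
Variable A : AbG.
Local Infix "+'" := (@aadd A) (at level 50, left associativity).
Local Notation "0'" := (@azero A).
Local Notation "-' x" := (@aopp A x) (at level 35, right associativity).

Lemma add0r (x : A) : x +' 0' = x. Proof. rewrite aaddC. apply aadd0. Qed.
Lemma addrN (x : A) : x +' -' x = 0'. Proof. rewrite aaddC. apply aaddN. Qed.
Lemma addKr (x y : A) : -' x +' (x +' y) = y. Proof. now rewrite aaddA, aaddN, aadd0. Qed.
Lemma addrK (x y : A) : (x +' y) +' -' y = x. Proof. now rewrite <- aaddA, addrN, add0r. Qed.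
Lemma add_cancel (x y z : A) : x +' y = x +' z -> y = z.
Proof. intros H. rewrite <- (addKr x y), H, addKr. reflexivity. Qed.
Lemma oppK (x : A) : -' -' x = x.
Proof. apply (add_cancel (-' x)). now rewrite aaddN, addrN. Qed.
Lemma opp0 : -' (0' : A) = 0'. Proof. rewrite <- (add0r (-' 0')). apply aaddN. Qed.
Lemma addCA (x y z : A) : x +' (y +' z) = y +' (x +' z).
Proof. rewrite !aaddA, (aaddC x y). reflexivity. Qed.
Lemma addACA (x y z t : A) : (x +' y) +' (z +' t) = (x +' z) +' (y +' t).
Proof. rewrite <- !aaddA. f_equal. apply addCA. Qed.
Lemma oppD (x y : A) : -' (x +' y) = -' x +' -' y.
Proof. apply (add_cancel (x +' y)). rewrite addrN. rewrite addACA, !addrN, aadd0. reflexivity. Qed.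
Lemma sub_eq0 (x y : A) : x +' -' y = 0' -> x = y.
Proof. intros H. transitivity ((x +' -' y) +' y). rewrite <- aaddA, aaddN, add0r; auto. rewrite H. apply aadd0. Qed.

Fixpoint natmul (n : nat) (x : A) : A := match n with O => 0' | S n => x +' natmul n x end.
Definition zact (n : Z) (x : A) : A :=
  match n with Z0 => 0' | Zpos p => natmul (Pos.to_nat p) x | Zneg p => -' natmul (Pos.to_nat p) x end.

Lemma natmul_add m n x : natmul (m + n) x = natmul m x +' natmul n x.
Proof. induction m; simpl. now rewrite aadd0. now rewrite IHm, aaddA. Qed.
Lemma natmul_addx n x y : natmul n (x +' y) = natmul n x +' natmul n y.
Proof. induction n; simpl. now rewrite aadd0. rewrite IHn. apply addACA. Qed.
Lemma natmul_mul m n x : natmul (m * n) x = natmul m (natmul n x).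
Proof. induction m; simpl; auto. now rewrite natmul_add, IHm. Qed.
Lemma natmul0 n : natmul n (0' : A) = 0'.
Proof. induction n; simpl; auto. now rewrite IHn, aadd0. Qed.
Lemma natmul_opp n x : natmul n (-' x) = -' natmul n x.
Proof. induction n; simpl. now rewrite opp0. now rewrite IHn, oppD. Qed.

Lemma zact_nat (n : nat) x : zact (Z.of_nat n) x = natmul n x.
Proof. destruct n. reflexivity. simpl. now rewrite SuccNat2Pos.id_succ. Qed.
Lemma zact_opp n x : zact (Z.opp n) x = -' zact n x.
Proof. destruct n; simpl; auto. now rewrite opp0. now rewrite oppK. Qed.
Lemma zact_sub_nat (a b : nat) x : zact (Z.of_nat a - Z.of_nat b) x = natmul a x +' -' natmul b x.
Proof.
  destruct (Nat.le_gt_cases b a) as [H|H].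
  - replace (Z.of_nat a - Z.of_nat b) with (Z.of_nat (a - b)) by lia. rewrite zact_nat.
    replace a with ((a - b) + b)%nat at 2 by lia. rewrite natmul_add, addrK. reflexivity.
  - replace (Z.of_nat a - Z.of_nat b) with (Z.opp (Z.of_nat (b - a))) by lia. rewrite zact_opp, zact_nat.
    replace b with ((b - a) + a)%nat at 2 by lia. rewrite natmul_add, oppD, addCA, addrN, add0r. reflexivity.
Qed.
Lemma zact_diff (n : Z) : exists a b : nat, n = Z.of_nat a - Z.of_nat b.
Proof. exists (Z.to_nat n), (Z.to_nat (Z.opp n)). lia. Qed.
Lemma zact_add m n x : zact (m + n) x = zact m x +' zact n x.
Proof.
  destruct (zact_diff m) as [a [b ->]]. destruct (zact_diff n) as [c [d ->]].
  replace (Z.of_nat a - Z.of_nat b + (Z.of_nat c - Z.of_nat d)) with (Z.of_nat (a + c) - Z.of_nat (b + d)) by lia.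
  rewrite !zact_sub_nat, !natmul_add, oppD. apply addACA.
Qed.
Lemma zact_addx n x y : zact n (x +' y) = zact n x +' zact n y.
Proof. destruct n; simpl. now rewrite aadd0. apply natmul_addx. now rewrite natmul_addx, oppD. Qed.
Lemma zact_oppx n x : zact n (-' x) = -' zact n x.
Proof. destruct n; simpl. now rewrite opp0. apply natmul_opp. now rewrite natmul_opp. Qed.
Lemma zact0 x : zact 0 x = 0'. Proof. reflexivity. Qed.
Lemma zact1 x : zact 1 x = x. Proof. simpl. apply add0r. Qed.
Lemma zactx0 n : zact n (0' : A) = 0'. Proof. destruct n; simpl; rewrite ?natmul0, ?opp0; auto. Qed.
Lemma zact_sub m n x : zact (m - n) x = zact m x +' -' zact n x.
Proof. unfold Z.sub. now rewrite zact_add, zact_opp. Qed.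
Lemma zact_mul m n x : zact (m * n) x = zact m (zact n x).
Proof.
  destruct (zact_diff m) as [a [b ->]].
  replace ((Z.of_nat a - Z.of_nat b) * n) with (Z.of_nat a * n - Z.of_nat b * n) by ring.
  rewrite zact_sub, zact_sub_nat.
  assert (H : forall c : nat, zact (Z.of_nat c * n) x = natmul c (zact n x)).
  { induction c. reflexivity. rewrite Nat2Z.inj_succ, Z.mul_succ_l, zact_add, IHc. simpl. apply aaddC. }
  now rewrite !H.
Qed.

Fixpoint lsum {X : Type} (f : X -> A) (l : list X) : A :=
  match l with [] => 0' | x :: l => f x +' lsum f l end.
Lemma lsum_app {X} (f : X -> A) l1 l2 : lsum f (l1 ++ l2) = lsum f l1 +' lsum f l2.
Proof. induction l1; simpl. now rewrite aadd0. now rewrite IHl1, aaddA. Qed.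
Lemma lsum_add {X} (f g : X -> A) l : lsum (fun x => f x +' g x) l = lsum f l +' lsum g l.
Proof. induction l; simpl. now rewrite aadd0. rewrite IHl. apply addACA. Qed.
Lemma lsum_ext {X} (f g : X -> A) l : (forall x, In x l -> f x = g x) -> lsum f l = lsum g l.
Proof. induction l; simpl; intros H; auto. rewrite H, IHl; auto. Qed.
Lemma lsum_zero {X} (f : X -> A) l : (forall x, In x l -> f x = 0') -> lsum f l = 0'.
Proof. induction l; simpl; intros H; auto. rewrite H, IHl; auto. apply aadd0. Qed.
Lemma lsum_zact {X} (f : X -> A) n l : lsum (fun x => zact n (f x)) l = zact n (lsum f l).
Proof. induction l; simpl. now rewrite zactx0. now rewrite IHl, zact_addx. Qed.
Lemma lsum_opp {X} (f : X -> A) l : lsum (fun x => -' f x) l = -' lsum f l.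
Proof. induction l; simpl. now rewrite opp0. now rewrite IHl, oppD. Qed.
Lemma lsum_map {X Y} (f : Y -> A) (g : X -> Y) l : lsum f (map g l) = lsum (fun x => f (g x)) l.
Proof. induction l; simpl; auto. now rewrite IHl. Qed.
Lemma lsum_concat {X Y} (f : Y -> A) (g : X -> list Y) l :
  lsum f (concat (map g l)) = lsum (fun x => lsum f (g x)) l.
Proof. induction l; simpl; auto. now rewrite lsum_app, IHl. Qed.
Lemma lsum_swap {X Y} (f : X -> Y -> A) l1 l2 :
  lsum (fun x => lsum (f x) l2) l1 = lsum (fun y => lsum (fun x => f x y) l1) l2.
Proof.
  induction l1; simpl. symmetry. apply lsum_zero. auto.
  rewrite IHl1. rewrite <- lsum_add. reflexivity.
Qed.

Definition dec {X : Type} (x y : X) : {x = y} + {x <> y} := excluded_middle_informative (x = y).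

Lemma lsum_single {X} (f : X -> A) (s : list X) x0 :
  NoDup s -> In x0 s -> lsum (fun x => if dec x0 x then f x else 0') s = f x0.
Proof.
  induction s as [|x s IH]; simpl; intros Hn Hin. contradiction.
  inversion Hn as [|? ? Hx Hs]; subst.
  destruct (dec x0 x) as [->|Hne].
  - rewrite lsum_zero. apply add0r. intros y Hy. destruct (dec x y); auto. subst. contradiction.
  - destruct Hin as [->|Hin]. contradiction. rewrite IH; auto. apply aadd0.
Qed.
End Ab.

Arguments lsum {A X} _ _.
Arguments natmul {A} _ _.
Arguments zact {A} _ _.

Definition Zab : AbG := {| acar := Z; aadd := Z.add; azero := 0; aopp := Z.opp;
  aaddA := Z.add_assoc; aaddC := Z.add_comm; aadd0 := Z.add_0_l; aaddN := Z.add_opp_diag_l |}.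
Lemma zact_Z (n x : Z) : @zact Zab n x = n * x.
Proof.
  assert (H : forall k : nat, @natmul Zab k x = Z.of_nat k * x).
  { induction k. reflexivity. change (@natmul Zab (S k) x) with (x + @natmul Zab k x)%Z. rewrite IHk, Nat2Z.inj_succ. lia. }
  destruct n. reflexivity.
  - change (@zact Zab (Z.pos p) x) with (@natmul Zab (Pos.to_nat p) x). rewrite H, positive_nat_Z. reflexivity.
  - change (@zact Zab (Z.neg p) x) with (Z.opp (@natmul Zab (Pos.to_nat p) x)). rewrite H, positive_nat_Z. lia.
Qed.

Section Agg.
Variable A : AbG.
Variable X : Type.
Definition coef (l : list (X * Z)) (x : X) : Z :=
  fold_right (fun pn acc => (if dec (fst pn) x then snd pn else 0) + acc) 0 l.

Lemma agg (f : X -> A) (l : list (X * Z)) (s : list X) :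
  NoDup s -> (forall pn, In pn l -> In (fst pn) s) ->
  lsum (fun pn => zact (snd pn) (f (fst pn))) l = lsum (fun x => zact (coef l x) (f x)) s.
Proof.
  intros Hs. induction l as [|[x0 n0] l IH]; simpl; intros Hl.
  - symmetry. apply lsum_zero. intros. reflexivity.
  - rewrite IH by auto. symmetry.
    rewrite (lsum_ext _ _ (fun x => aadd (zact (if dec x0 x then n0 else 0) (f x)) (zact (coef l x) (f x)))).
    2:{ intros x _. unfold coef. simpl. apply zact_add. }
    rewrite lsum_add. f_equal. symmetry.
    rewrite <- (lsum_single A (fun x => zact n0 (f x)) s x0 Hs) by (apply (Hl (x0, n0)); auto).
    apply lsum_ext. intros x _. destruct (dec x0 x); auto.
Qed.
End Agg.

End PD.

Module PE.
Import PA PB PD.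

Fixpoint lin {A : AbG} {G : Group} {J : Type} (w : word G J) (z : J -> A) : A :=
  match w with
  | [] => azero
  | Const _ :: r => lin r z
  | Var j true :: r => aadd (z j) (lin r z)
  | Var j false :: r => aadd (aopp (z j)) (lin r z)
  end.

Section Quot.
Variable G : Group.
Local Notation "x * y" := (@gmul G x y).
Local Notation "1" := (@gone G).
Local Notation "x ^-1" := (@ginv G x) (at level 2).
Variables N S : G -> Prop.
Hypothesis HN : nsub G N.
Hypothesis HS1 : S 1.
Hypothesis HSM : forall x y, S x -> S y -> S (x * y).
Hypothesis HSV : forall x, S x -> S x^-1.
Hypothesis HNS : forall x, N x -> S x.
Hypothesis HSc : forall z, S z -> cen G N z.

Definition can (x : G) : G :=
  proj1_sig (constructive_indefinite_description (cong G N x) (ex_intro _ x (cong_refl G N HN x))).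
Lemma can_spec x : cong G N x (can x).
Proof. unfold can. destruct constructive_indefinite_description. simpl. auto. Qed.
Lemma can_eq x y : cong G N x y -> can x = can y.
Proof.
  intros H.
  assert (E : cong G N x = cong G N y).
  { apply functional_extensionality. intros z. apply propositional_extensionality. split; intros Hz.
    - apply (cong_trans G N HN) with x; auto. apply (cong_sym G N HN); auto.
    - apply (cong_trans G N HN) with y; auto. }
  unfold can. generalize (ex_intro (cong G N x) x (cong_refl G N HN x)).
  generalize (ex_intro (cong G N y) y (cong_refl G N HN y)).
  rewrite E. intros h1 h2. rewrite (proof_irrelevance _ h1 h2). reflexivity.
Qed.
Lemma S_can x : S x -> S (can x).
Proof.
  intros Hx. pose proof (can_spec x) as H. unfold cong in H.
  apply (N_eq G S (x * (x^-1 * can x))). gsolve. apply HSM; auto.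
Qed.
Lemma can_idem x : can (can x) = can x.
Proof. apply can_eq. apply (cong_sym G N HN). apply can_spec. Qed.

Definition Qc := {x : G | S x /\ can x = x}.
Definition mk (x : G) (Hx : S x) : Qc := exist _ (can x) (Logic.conj (S_can x Hx) (can_idem x)).
Lemma Qc_eq (a b : Qc) : proj1_sig a = proj1_sig b -> a = b.
Proof.
  destruct a as [a Ha], b as [b Hb]. simpl. intros ->. f_equal. apply proof_irrelevance.
Qed.
Lemma mk_eq x y Hx Hy : cong G N x y -> mk x Hx = mk y Hy.
Proof. intros H. apply Qc_eq. simpl. now apply can_eq. Qed.
Lemma mk_inj x y Hx Hy : mk x Hx = mk y Hy -> cong G N x y.
Proof.
  intros H. apply (f_equal (@proj1_sig _ _)) in H. simpl in H.
  apply (cong_trans G N HN) with (can x). apply can_spec. rewrite H. apply (cong_sym G N HN), can_spec.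
Qed.
Lemma valS (a : Qc) : S (proj1_sig a). Proof. apply (proj2_sig a). Qed.
Lemma mk_val (a : Qc) : mk (proj1_sig a) (valS a) = a.
Proof. apply Qc_eq. simpl. apply (proj2_sig a). Qed.
Lemma cong_val_mk x Hx : cong G N (proj1_sig (mk x Hx)) x.
Proof. simpl. apply (cong_sym G N HN), can_spec. Qed.

Definition qadd (a b : Qc) : Qc := mk _ (HSM _ _ (valS a) (valS b)).
Definition qzero : Qc := mk 1 HS1.
Definition qopp (a : Qc) : Qc := mk _ (HSV _ (valS a)).

Lemma qaddA a b c : qadd a (qadd b c) = qadd (qadd a b) c.
Proof.
  unfold qadd. apply mk_eq.
  apply (cong_trans G N HN) with (proj1_sig a * (proj1_sig b * proj1_sig c)).
  apply (cong_mul G N HN). apply (cong_refl G N HN). apply cong_val_mk.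
  apply (cong_trans G N HN) with ((proj1_sig a * proj1_sig b) * proj1_sig c).
  apply (cong_eq G N HN). gsolve.
  apply (cong_mul G N HN). apply (cong_sym G N HN), cong_val_mk. apply (cong_refl G N HN).
Qed.
Lemma qaddC a b : qadd a b = qadd b a.
Proof. unfold qadd. apply mk_eq. apply (cong_sym G N HN). apply (HSc _ (valS a)). Qed.
Lemma qadd0 a : qadd qzero a = a.
Proof.
  rewrite <- (mk_val a) at 2. unfold qadd, qzero. apply mk_eq.
  apply (cong_trans G N HN) with (1 * proj1_sig a).
  apply (cong_mul G N HN). apply cong_val_mk. apply (cong_refl G N HN). apply (cong_eq G N HN). gsolve.
Qed.
Lemma qaddN a : qadd (qopp a) a = qzero.
Proof.
  unfold qadd, qzero, qopp. apply mk_eq.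
  apply (cong_trans G N HN) with ((proj1_sig a)^-1 * proj1_sig a).
  apply (cong_mul G N HN). apply cong_val_mk. apply (cong_refl G N HN). apply (cong_eq G N HN). gsolve.
Qed.

Definition Qab : AbG := {| acar := Qc; aadd := qadd; azero := qzero; aopp := qopp;
  aaddA := qaddA; aaddC := qaddC; aadd0 := qadd0; aaddN := qaddN |}.

Definition pi (x : G) : Qab :=
  match excluded_middle_informative (S x) with left H => mk x H | right _ => qzero end.
Lemma pi_S x (H : S x) : pi x = mk x H.
Proof. unfold pi. destruct excluded_middle_informative. apply mk_eq, (cong_refl G N HN). contradiction. Qed.
Lemma pi_mul x y : S x -> S y -> pi (x * y) = aadd (pi x) (pi y).
Proof.
  intros Hx Hy. rewrite (pi_S x Hx), (pi_S y Hy), (pi_S _ (HSM _ _ Hx Hy)). simpl. unfold qadd. apply mk_eq.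
  apply (cong_mul G N HN); apply (cong_sym G N HN), cong_val_mk.
Qed.
Lemma pi_1 : pi 1 = azero. Proof. rewrite (pi_S _ HS1). reflexivity. Qed.
Lemma pi_inv x : S x -> pi x^-1 = aopp (pi x).
Proof.
  intros Hx. apply (add_cancel Qab (pi x)). rewrite addrN. rewrite <- pi_mul; auto. rewrite gmulVr. apply pi_1.
Qed.
Lemma pi_ker x : S x -> (pi x = azero <-> N x).
Proof.
  intros Hx. rewrite (pi_S x Hx). split; intros H.
  - apply mk_inj in H. unfold cong in H. apply (NV' G N HN). revert H. apply N_eq. gsolve.
  - simpl. unfold qzero. apply mk_eq. unfold cong. gsimpl. apply NV; auto.
Qed.
Lemma pi_surj (a : Qab) : exists x, S x /\ pi x = a.
Proof. exists (proj1_sig a). split. apply valS. rewrite (pi_S _ (valS a)). apply mk_val. Qed.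
Lemma pi_pow x n : S x -> natmul n (pi x) = pi (gpow x n).
Proof.
  intros Hx. assert (Hp : forall k, S (gpow x k)) by (induction k; simpl; auto).
  induction n; simpl. symmetry; apply pi_1. rewrite pi_mul; auto. now rewrite IHn.
Qed.

Fixpoint Vw {J : Type} (z : J -> G) (w : word G J) : G :=
  match w with
  | [] => 1
  | Const _ :: r => Vw z r
  | (Var j b as l) :: r => eval_letter z l * Vw z r
  end.

Lemma Vw_S {J} (z : J -> G) w : (forall j, S (z j)) -> S (Vw z w).
Proof. intros Hz. induction w as [|[g|j []] r IH]; simpl; auto. Qed.

Lemma pi_Vw {J} (z : J -> G) w : (forall j, S (z j)) -> pi (Vw z w) = lin w (fun j => pi (z j)).
Proof.
  intros Hz. induction w as [|[g|j []] r IH]; simpl; auto. apply pi_1.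
  - rewrite pi_mul; auto. now rewrite IH. apply Vw_S; auto.
  - rewrite pi_mul, pi_inv; auto. now rewrite IH. apply Vw_S; auto.
Qed.

Lemma word_shift {J} (a z : J -> G) w : (forall j, S (z j)) ->
  cong G N (eval_word (fun j => a j * z j) w) (eval_word a w * Vw z w).
Proof.
  intros Hz. induction w as [|[g|j []] r IH]; simpl.
  - apply (cong_eq G N HN). gsolve.
  - apply (cong_trans G N HN) with (g * (eval_word a r * Vw z r)).
    apply (cong_mul G N HN). apply (cong_refl G N HN). exact IH. apply (cong_eq G N HN). gsolve.
  - apply (cong_trans G N HN) with ((a j * z j) * (eval_word a r * Vw z r)).
    apply (cong_mul G N HN). apply (cong_refl G N HN). exact IH.
    apply (cong_trans G N HN) with (a j * ((z j * eval_word a r) * Vw z r)).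
    apply (cong_eq G N HN). gsolve.
    apply (cong_trans G N HN) with (a j * ((eval_word a r * z j) * Vw z r)).
    apply (cong_mul G N HN). apply (cong_refl G N HN). apply (cong_mul G N HN).
    apply (cong_sym G N HN), HSc; auto. apply (cong_refl G N HN).
    apply (cong_eq G N HN). unfold eval_word. simpl. gsolve.
  - apply (cong_trans G N HN) with ((a j * z j)^-1 * (eval_word a r * Vw z r)).
    apply (cong_mul G N HN). apply (cong_refl G N HN). exact IH.
    apply (cong_trans G N HN) with ((z j)^-1 * (((a j)^-1 * eval_word a r) * Vw z r)).
    apply (cong_eq G N HN). gsolve.
    apply (cong_trans G N HN) with ((((a j)^-1 * eval_word a r) * (z j)^-1) * Vw z r).
    rewrite gmulA. apply (cong_mul G N HN). 2: apply (cong_refl G N HN).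
    apply (cong_sym G N HN), HSc; auto.
    apply (cong_eq G N HN). gsolve.
Qed.

Lemma corr {I J : Type} (w : I -> word G J) (a : J -> G) :
  (forall i, S (eval_word a (w i))) ->
  (forall c : I -> Qab, exists z : J -> Qab, forall i, lin (w i) z = c i) ->
  exists a' : J -> G, forall i, N (eval_word a' (w i)).
Proof.
  intros Ha Hsolv.
  destruct (Hsolv (fun i => pi (eval_word a (w i))^-1)) as [z Hz].
  exists (fun j => a j * proj1_sig (z j)). intros i.
  assert (HzS : forall j, S (proj1_sig (z j))) by (intros; apply valS).
  apply (cong_N G N HN) with (eval_word a (w i) * Vw (fun j => proj1_sig (z j)) (w i)).
  apply word_shift; auto.
  apply pi_ker. apply HSM; auto. apply Vw_S; auto.
  rewrite pi_mul, pi_Vw; auto. 2: apply Vw_S; auto.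
  assert (E : (fun j => pi (proj1_sig (z j))) = z).
  { apply functional_extensionality. intros j. rewrite (pi_S _ (valS (z j))). apply mk_val. }
  rewrite E, Hz, pi_inv; auto. apply addrN.
Qed.
End Quot.

End PE.

Module PF1.
Import PD PE.
Open Scope Z_scope.

Section LA.
Variable G : Group.
Variables I J : Type.
Variable w : I -> word G J.

Definition E (i : I) (j : J) : Z := exp_sum (w i) j.

Fixpoint vars (u : word G J) : list J :=
  match u with [] => [] | Const _ :: r => vars r | Var j _ :: r => j :: vars r end.
Fixpoint varpairs (u : word G J) : list (J * Z) :=
  match u with [] => [] | Const _ :: r => varpairs r
  | Var j b :: r => (j, if b then 1 else -1) :: varpairs r end.

Lemma exp_sum_notin u j : ~ In j (vars u) -> exp_sum u j = 0.
Proof.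
  induction u as [|[g|k b] r IH]; simpl; intros H; auto.
  unfold exp_sum in *. simpl. destruct excluded_middle_informative. subst. tauto.
  rewrite IH; auto.
Qed.

Lemma coef_varpairs u j : coef J (varpairs u) j = exp_sum u j.
Proof.
  induction u as [|[g|k b] r IH]; simpl; auto.
  unfold coef in *. simpl. unfold exp_sum. simpl. rewrite IH. unfold dec. reflexivity.
Qed.

Lemma In_varpairs u pn : In pn (varpairs u) -> In (fst pn) (vars u).
Proof. induction u as [|[g|k b] r IH]; simpl; auto. intros [<-|H]; simpl; auto. Qed.

Variable A : AbG.

Lemma lin_pairs (u : word G J) (z : J -> A) :
  lin u z = lsum (fun pn => zact (snd pn) (z (fst pn))) (varpairs u).
Proof.
  induction u as [|[g|k []] r IH]; simpl; auto.
  - rewrite IH. now rewrite add0r.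
  - rewrite IH. now rewrite add0r.
Qed.

Lemma lin_rep (u : word G J) (z : J -> A) L : NoDup L -> (forall j, In j (vars u) -> In j L) ->
  lin u z = lsum (fun j => zact (exp_sum u j) (z j)) L.
Proof.
  intros HL Hin. rewrite lin_pairs, (agg A J z _ L HL).
  - apply lsum_ext. intros j _. now rewrite coef_varpairs.
  - intros pn Hpn. apply Hin, In_varpairs, Hpn.
Qed.

Definition vl (l : list (I * Z)) (j : J) : Z := fold_right (fun pn acc => snd pn * E (fst pn) j + acc) 0 l.
Definition Phi (l : list (I * Z)) (z : J -> A) : A := lsum (fun pn => zact (snd pn) (lin (w (fst pn)) z)) l.
Definition Gam (c : I -> A) (l : list (I * Z)) : A := lsum (fun pn => zact (snd pn) (c (fst pn))) l.
Definition allv (l : list (I * Z)) : list J := concat (map (fun pn => vars (w (fst pn))) l).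

Lemma vl_notin l j : ~ In j (allv l) -> vl l j = 0.
Proof.
  induction l as [|[i n] l IH]; simpl; auto. unfold allv. simpl. rewrite in_app_iff. intros H.
  rewrite IH by (unfold allv; tauto). unfold E. rewrite exp_sum_notin by tauto. lia.
Qed.

Lemma lsum_zact_sum {X} (f : X -> Z) (x : A) l :
  lsum (fun y => zact (f y) x) l = zact (fold_right (fun y acc => f y + acc) 0 l) x.
Proof. induction l; simpl; auto. now rewrite IHl, zact_add. Qed.

Lemma Phi_rep l z L : NoDup L -> (forall j, In j (allv l) -> In j L) ->
  Phi l z = lsum (fun j => zact (vl l j) (z j)) L.
Proof.
  intros HL Hin. unfold Phi.
  rewrite (lsum_ext _ _ (fun pn => lsum (fun j => zact (snd pn * E (fst pn) j) (z j)) L)).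
  - rewrite lsum_swap. apply lsum_ext. intros j _. unfold vl. now rewrite lsum_zact_sum.
  - intros pn Hpn. rewrite (lin_rep _ _ L HL). rewrite <- lsum_zact. apply lsum_ext. intros j _.
    now rewrite zact_mul.
    intros j Hj. apply Hin. unfold allv. apply in_concat. exists (vars (w (fst pn))). split; auto.
    apply in_map_iff. exists pn. auto.
Qed.

Definition ndL (L : list J) : list J := nodup dec L.
Lemma ndL_nodup L : NoDup (ndL L). Proof. apply NoDup_nodup. Qed.
Lemma ndL_in L x : In x (ndL L) <-> In x L. Proof. apply nodup_In. Qed.

Lemma Phi_app l1 l2 z : Phi (l1 ++ l2) z = aadd (Phi l1 z) (Phi l2 z).
Proof. unfold Phi. apply lsum_app. Qed.
Lemma Gam_app c l1 l2 : Gam c (l1 ++ l2) = aadd (Gam c l1) (Gam c l2).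
Proof. unfold Gam. apply lsum_app. Qed.
Lemma vl_app l1 l2 j : vl (l1 ++ l2) j = vl l1 j + vl l2 j.
Proof. induction l1; simpl; auto. rewrite IHl1. lia. Qed.
Definition scale (t : Z) (l : list (I * Z)) := map (fun pn => (fst pn, t * snd pn)) l.
Lemma Phi_scale t l z : Phi (scale t l) z = zact t (Phi l z).
Proof. unfold Phi, scale. rewrite lsum_map, <- lsum_zact. apply lsum_ext. intros. simpl. apply zact_mul. Qed.
Lemma Gam_scale c t l : Gam c (scale t l) = zact t (Gam c l).
Proof. unfold Gam, scale. rewrite lsum_map, <- lsum_zact. apply lsum_ext. intros. simpl. apply zact_mul. Qed.
Lemma vl_scale t l j : vl (scale t l) j = t * vl l j.
Proof. induction l; simpl; auto. lia. rewrite IHl. lia. Qed.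
Lemma allv_app l1 l2 : allv (l1 ++ l2) = allv l1 ++ allv l2.
Proof. unfold allv. now rewrite map_app, concat_app. Qed.
Lemma allv_scale t l : allv (scale t l) = allv l.
Proof. unfold allv, scale. now rewrite map_map. Qed.

Lemma Phi_dep l z z' : (forall j, vl l j <> 0 -> z j = z' j) -> Phi l z = Phi l z'.
Proof.
  intros H. rewrite !(Phi_rep l _ (ndL (allv l))) by (auto using ndL_nodup; intros; apply ndL_in; auto).
  apply lsum_ext. intros j _. destruct (Z.eq_dec (vl l j) 0) as [->|Hn]. reflexivity. now rewrite H.
Qed.

Lemma Phi_zero l z : (forall j, vl l j = 0) -> Phi l z = azero.
Proof.
  intros H. rewrite (Phi_rep l _ (ndL (allv l))) by (auto using ndL_nodup; intros; apply ndL_in; auto).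
  apply lsum_zero. intros j _. now rewrite H.
Qed.

Lemma Phi_except l z z' j0 : (forall j, j <> j0 -> vl l j <> 0 -> z j = z' j) ->
  Phi l z = aadd (Phi l z') (zact (vl l j0) (aadd (z j0) (aopp (z' j0)))).
Proof.
  intros H. set (L := ndL (j0 :: allv l)).
  assert (HL : NoDup L) by apply ndL_nodup.
  assert (HLi : forall j, In j (allv l) -> In j L) by (intros; apply ndL_in; simpl; auto).
  rewrite !(Phi_rep l _ L HL HLi).
  rewrite <- (lsum_single A (fun j => zact (vl l j) (aadd (z j) (aopp (z' j)))) L j0 HL) by (apply ndL_in; simpl; auto).
  rewrite <- lsum_add. apply lsum_ext. intros j _. destruct (dec j0 j) as [<-|Hne].
  - rewrite zact_addx, zact_oppx. rewrite addCA, addrN, add0r. reflexivity.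
  - destruct (Z.eq_dec (vl l j) 0) as [->|Hv]. simpl. now rewrite aadd0.
    rewrite H by auto. now rewrite add0r.
Qed.

Lemma Phi_single i z : Phi [(i, 1)] z = lin (w i) z.
Proof. unfold Phi. simpl. now rewrite !add0r. Qed.
Lemma Gam_single c i : Gam c [(i, 1)] = c i.
Proof. unfold Gam. simpl. now rewrite !add0r. Qed.
End LA.

End PF1.

Module PF2.
Import PD PE PF1 PZorn.
Open Scope Z_scope.

Lemma ab_solve (A : AbG) (P X a b : A) : aadd P (aopp b) = aadd X (aopp a) -> aadd P (aadd a (aopp b)) = X.
Proof.
  intros H. rewrite (aaddC a), aaddA, H, <- aaddA, aaddN, add0r. reflexivity.
Qed.

Lemma min_nat (P : nat -> Prop) : (exists n, P n) -> exists n, P n /\ forall m, P m -> (n <= m)%nat.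
Proof.
  intros [n Hn]. induction n as [n IH] using (well_founded_induction lt_wf).
  destruct (classic (exists m, P m /\ (m < n)%nat)) as [[m [Hm Hmn]]|Hno].
  - apply (IH m Hmn Hm).
  - exists n. split; auto. intros m Hm. destruct (Nat.le_gt_cases n m); auto. exfalso. eauto.
Qed.

Lemma lsumZ {X} (f : X -> Z) l : @lsum Zab X f l = fold_right (fun x acc => f x + acc) 0 l.
Proof. induction l; simpl; auto. now rewrite IHl. Qed.

Lemma fold_scaleZ {I} (s : list I) (cf cf' f : I -> Z) k : (forall i, In i s -> cf i = k * cf' i) ->
  fold_right (fun i acc => cf i * f i + acc) 0 s = k * fold_right (fun i acc => cf' i * f i + acc) 0 s.
Proof.
  induction s as [|a s IHs]; simpl; intros H. lia.
  rewrite IHs by (intros; apply H; auto). rewrite (H a) by auto. lia.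
Qed.
Lemma fold_scaleN {I} (s : list I) (cf cf' : I -> Z) (k : nat) : (forall i, In i s -> cf i = Z.of_nat k * cf' i) ->
  fold_right (fun i acc => Z.abs_nat (cf i) + acc)%nat 0%nat s = (k * fold_right (fun i acc => Z.abs_nat (cf' i) + acc)%nat 0%nat s)%nat.
Proof.
  induction s as [|a s IHs]; simpl; intros H. lia.
  rewrite IHs by (intros; apply H; auto). rewrite (H a) by auto.
  rewrite Zabs2Nat.inj_mul, Zabs2Nat.id. lia.
Qed.

Section Ind.
Variable G : Group.
Variables I J : Type.
Variable w : I -> word G J.
Variable p : nat.
Hypothesis Hp : prime (Z.of_nat p).
Hypothesis Hns : p_nonsingular p w.

Lemma descent (s : list I) : NoDup s -> forall cf : I -> Z,
  (forall j, fold_right (fun i acc => cf i * E G I J w i j + acc) 0 s = 0) -> forall i, In i s -> cf i = 0.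
Proof.
  intros Hs.
  set (meas := fun cf : I -> Z => fold_right (fun i acc => Z.abs_nat (cf i) + acc)%nat 0%nat s).
  assert (Hz : forall cf, meas cf = 0%nat -> forall i, In i s -> cf i = 0).
  { intros cf. unfold meas. clear Hs. induction s as [|a s IH]; simpl; intros H i Hi. contradiction.
    destruct Hi as [<-|Hi]. lia. apply IH; auto. lia. }
  assert (Hp1 : (1 < Z.of_nat p)) by (destruct Hp; lia).
  assert (Hmain : forall M cf, (meas cf <= M)%nat ->
     (forall j, fold_right (fun i acc => cf i * E G I J w i j + acc) 0 s = 0) -> forall i, In i s -> cf i = 0).
  { induction M as [|M IH]; intros cf Hm Hsum.
    - apply Hz. lia.
    - assert (Hdiv : forall i, In i s -> (Z.of_nat p | cf i)).
      { intros i Hi. apply (Hns s cf Hs). intros j. unfold E in Hsum. rewrite Hsum. apply Z.divide_0_r. exact Hi. }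
      set (cf' := fun i => cf i / Z.of_nat p).
      assert (Hcf : forall i, In i s -> cf i = Z.of_nat p * cf' i).
      { intros i Hi. unfold cf'. destruct (Hdiv i Hi) as [k Hk]. rewrite Hk, Z.div_mul by lia. lia. }
      assert (Hsum' : forall j, fold_right (fun i acc => cf' i * E G I J w i j + acc) 0 s = 0).
      { intros j. specialize (Hsum j).
        rewrite (fold_scaleZ s cf cf' _ _ Hcf) in Hsum. apply Z.mul_eq_0 in Hsum. lia. }
      assert (Hmeas : meas cf = (p * meas cf')%nat).
      { unfold meas. apply fold_scaleN. exact Hcf. }
      destruct (Nat.eq_dec (meas cf) 0) as [H0|H0]. apply Hz; auto.
      intros i Hi. rewrite Hcf by auto. rewrite (IH cf'); auto. lia. nia. }
  intros cf. apply (Hmain (meas cf) cf). lia.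
Qed.

Variable A : AbG.
Lemma Zindep (c : I -> A) l : (forall j, vl G I J w l j = 0) -> Gam I A c l = azero.
Proof.
  intros Hv. set (s := nodup dec (map fst l)).
  assert (Hs : NoDup s) by apply NoDup_nodup.
  assert (Hin : forall pn, In pn l -> In (fst pn) s) by (intros pn H; apply nodup_In, in_map; auto).
  unfold Gam. rewrite (agg A I c l s Hs Hin).
  apply lsum_zero. intros i Hi. rewrite (descent s Hs (coef I l)). reflexivity.
  - intros j. transitivity (vl G I J w l j); [|apply Hv]. unfold vl.
    transitivity (@lsum Zab I (fun i => coef I l i * E G I J w i j) s). { symmetry. apply lsumZ. }
    transitivity (@lsum Zab (I * Z) (fun pn => snd pn * E G I J w (fst pn) j) l). 2: { apply lsumZ. }
    rewrite (lsum_ext Zab (fun pn => snd pn * E G I J w (fst pn) j) (fun pn => @zact Zab (snd pn) (E G I J w (fst pn) j))) by (intros; symmetry; apply zact_Z).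
    rewrite (agg Zab I (fun i => E G I J w i j) l s Hs Hin). apply (lsum_ext Zab). intros. symmetry. apply zact_Z.
  - exact Hi.
Qed.
End Ind.

End PF2.

Module PF3.
Import PD PE PF1 PF2 PZorn.
Open Scope Z_scope.

Section Baer.
Variable G : Group.
Variables I J : Type.
Variable w : I -> word G J.
Variable p : nat.
Hypothesis Hp : prime (Z.of_nat p).
Hypothesis Hns : p_nonsingular p w.
Variable A : AbG.
Hypothesis Hdiv : forall (a : A) (d : nat), (0 < d)%nat -> exists b, natmul d b = a.
Variable c : I -> A.

Local Notation vl := (vl G I J w).
Local Notation Phi := (Phi G I J w A).
Local Notation Gam := (Gam I A c).

Definition functional (X : J * A -> Prop) := forall j y1 y2, X (j, y1) -> X (j, y2) -> y1 = y2.
Definition Cc (X : J * A -> Prop) := forall l z, (forall j, vl l j <> 0 -> X (j, z j)) -> Phi l z = Gam l.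
Definition PP X := functional X /\ Cc X.

Lemma Cc_trivial l z : (forall j, vl l j = 0) -> Phi l z = Gam l.
Proof. intros H. rewrite Phi_zero by auto. symmetry. apply (Zindep G I J w p Hp Hns). auto. Qed.

Lemma chain_ok : forall F : (J * A -> Prop) -> Prop, (forall X, F X -> PP X) ->
     (forall X Y, F X -> F Y -> (forall t, X t -> Y t) \/ (forall t, Y t -> X t)) ->
     PP (fun a => exists2 X, F X & X a).
Proof.
  intros F HF Htot. split.
  - intros j y1 y2 [X1 H1 HX1] [X2 H2 HX2].
    destruct (Htot X1 X2 H1 H2) as [H|H].
    + apply (proj1 (HF X2 H2) j); auto.
    + apply (proj1 (HF X1 H1) j); auto.
  - intros l z Hlz.
    destruct (classic (forall j, vl l j = 0)) as [H0|Hn]. apply Cc_trivial; auto.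
    apply not_all_ex_not in Hn. destruct Hn as [j1 Hj1].
    destruct (Hlz j1 Hj1) as [X1 HX1 _].
    assert (Hfin : forall L, exists2 X, F X & forall j, In j L -> vl l j <> 0 -> X (j, z j)).
    { induction L as [|j L [X HX HXL]].
      - exists X1; auto. intros j [].
      - destruct (classic (vl l j <> 0)) as [Hv|Hv].
        + destruct (Hlz j Hv) as [X' HX' HX'j].
          destruct (Htot X X' HX HX') as [H|H].
          * exists X'; auto. intros j' [<-|Hj'] Hv'; auto.
          * exists X; auto. intros j' [<-|Hj'] Hv'; auto.
        + exists X; auto. intros j' [<-|Hj'] Hv'; auto. contradiction. }
    destruct (Hfin (allv G I J w l)) as [X HX HXL].
    apply (proj2 (HF X HX)). intros j Hj. apply HXL; auto.
    destruct (classic (In j (allv G I J w l))) as [Hi|Hi]; auto. exfalso. apply Hj. apply vl_notin; auto.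
Qed.

Section Ext.
Variable A0 : J * A -> Prop.
Hypothesis HA0 : PP A0.
Variable j0 : J.
Hypothesis Hj0 : forall y, ~ A0 (j0, y).

Definition Ach l (z : J -> A) := forall j, j <> j0 -> vl l j <> 0 -> A0 (j, z j).

Lemma ext_base y0 l z : (forall j, vl l j <> 0 -> A0 (j, z j) \/ (j, z j) = (j0, y0)) -> vl l j0 = 0 ->
  Phi l z = Gam l.
Proof.
  intros HB Hv. apply (proj2 HA0). intros j Hj. destruct (HB j Hj) as [H|H]; auto.
  injection H; intros _ ->. contradiction.
Qed.

Lemma ext_func y0 : functional (fun t => A0 t \/ t = (j0, y0)).
Proof.
  intros j y1 y2 [H1|H1] [H2|H2].
  - apply (proj1 HA0 j); auto.
  - injection H2; intros -> ->. exfalso. apply (Hj0 y1); auto.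
  - injection H1; intros -> ->. exfalso. apply (Hj0 y2); auto.
  - injection H1; injection H2; intros; subst; auto.
Qed.

Lemma extend : exists y0, PP (fun t => A0 t \/ t = (j0, y0)).
Proof.
  destruct (classic (exists l z, Ach l z /\ vl l j0 <> 0)) as [Hex|Hno].
  2:{ exists azero. split. apply ext_func. intros l z HB.
      apply (ext_base azero); auto.
      destruct (Z.eq_dec (vl l j0) 0) as [e|Hv]; auto. exfalso. apply Hno. exists l, z. split; auto.
      intros j Hj Hvj. destruct (HB j Hvj) as [H|H]; auto. injection H; intros; contradiction. }
  set (Dset := fun n : nat => (0 < n)%nat /\ exists l z, Ach l z /\ vl l j0 = Z.of_nat n).
  assert (HD : exists n, Dset n).
  { destruct Hex as [l [z [Hl Hv]]].
    destruct (Z_lt_le_dec 0 (vl l j0)) as [Hpos|Hneg].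
    - exists (Z.to_nat (vl l j0)). split. lia. exists l, z. split; auto. lia.
    - exists (Z.to_nat (- vl l j0)). split. lia. exists (scale I (-1) l), z. split.
      + intros j Hj Hvj. apply Hl; auto. rewrite vl_scale in Hvj. lia.
      + rewrite vl_scale. lia. }
  destruct (min_nat Dset HD) as [d [[Hd [l0 [z0 [Hl0 Hv0]]]] Hmin]].
  set (z0' := fun j => if dec j j0 then azero else z0 j).
  destruct (Hdiv (aadd (Gam l0) (aopp (Phi l0 z0'))) d Hd) as [y0 Hy0].
  exists y0. split. apply ext_func.
  intros l z HB.
  destruct (Z.eq_dec (vl l j0) 0) as [Hv|Hv]. apply (ext_base y0); auto.
  assert (Hzj0 : z j0 = y0).
  { destruct (HB j0 Hv) as [H|H]. exfalso; apply (Hj0 _ H). injection H; auto. }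
  set (mm := vl l j0) in *.
  set (t := mm / Z.of_nat d). set (r := mm mod Z.of_nat d).
  pose proof (Z.div_mod mm (Z.of_nat d) ltac:(lia)) as Hdm.
  pose proof (Z.mod_pos_bound mm (Z.of_nat d) ltac:(lia)) as Hrb.
  set (l' := l ++ scale I (- t) l0).
  set (z'' := fun j => if dec j j0 then azero else if Z.eq_dec (vl l j) 0 then z0 j else z j).
  assert (Hvl' : forall j, vl l' j = vl l j + - t * vl l0 j).
  { intros j. unfold l'. rewrite vl_app, vl_scale. reflexivity. }
  assert (Hach : Ach l' z'').
  { intros j Hj Hvj. unfold z''. destruct (dec j j0) as [e|_]. contradiction.
    destruct (Z.eq_dec (vl l j) 0) as [e|ne].
    - apply Hl0; auto. rewrite Hvl', e in Hvj. lia.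
    - destruct (HB j ne) as [H|H]; auto. injection H; intros; contradiction. }
  assert (Hr0 : r = 0).
  { destruct (Z.eq_dec r 0) as [e|ne]; auto. exfalso.
    assert (Dset (Z.to_nat r)).
    { fold r in Hrb. fold t r in Hdm. split. lia. exists l', z''. split; auto. rewrite Hvl', Hv0.
      rewrite Z2Nat.id by lia. fold mm. lia. }
    specialize (Hmin _ H). fold r in Hrb. lia. }
  assert (Hl'0 : vl l' j0 = 0) by (rewrite Hvl', Hv0; fold t r in Hdm; lia).
  assert (HC : Phi l' z'' = Gam l').
  { apply (proj2 HA0). intros j Hj. apply Hach; auto. intros ->. contradiction. }
  unfold l' in HC. rewrite Phi_app, Gam_app, Phi_scale, Gam_scale, !zact_opp in HC.
  assert (E1 : Phi l z = aadd (Phi l z'') (zact mm y0)).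
  { rewrite (Phi_except G I J w A l z z'' j0).
    - f_equal. fold mm. rewrite Hzj0. unfold z''. destruct (dec j0 j0) as [_|n]; [|contradiction].
      rewrite opp0, add0r. reflexivity.
    - intros j Hj Hvj. unfold z''. destruct (dec j j0); [contradiction|].
      destruct (Z.eq_dec (vl l j) 0); [contradiction|reflexivity]. }
  assert (E2 : Phi l0 z'' = Phi l0 z0').
  { apply Phi_dep. intros j Hvj. unfold z'', z0'. destruct (dec j j0) as [e|ne]; auto.
    destruct (Z.eq_dec (vl l j) 0) as [e|ne2]; auto.
    destruct (HB j ne2) as [H|H]. 2:{ injection H; intros; contradiction. }
    apply (proj1 HA0 j); auto. }
  assert (E3 : zact mm y0 = zact t (aadd (Gam l0) (aopp (Phi l0 z0')))).
  { rewrite <- Hy0, <- zact_nat, <- zact_mul. f_equal. fold t r in Hdm. lia. }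
  rewrite E1, E3, zact_addx, zact_oppx. rewrite E2 in HC.
  apply ab_solve. exact HC.
Qed.
End Ext.

Theorem baer : exists z : J -> A, forall i, lin (w i) z = c i.
Proof.
  destruct (zorn_sets (J * A) PP chain_ok) as [A0 [HA0 Hmax]].
  assert (Htot : forall j, exists y, A0 (j, y)).
  { intros j0. apply NNPP. intros Hn.
    assert (Hj0 : forall y, ~ A0 (j0, y)) by (intros y Hy; apply Hn; eauto).
    destruct (extend A0 HA0 j0 Hj0) as [y0 Hy0].
    apply (Hmax (fun t => A0 t \/ t = (j0, y0)) (fun t Ht => or_introl Ht)); auto.
    intros Hsub. apply (Hj0 y0). apply Hsub. right. reflexivity. }
  exists (fun j => proj1_sig (constructive_indefinite_description _ (Htot j))).
  intros i. rewrite <- Phi_single, <- (Gam_single I A c i). apply (proj2 HA0).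
  intros j _. destruct constructive_indefinite_description. simpl. auto.
Qed.
End Baer.

End PF3.

Module PF4.
Import PD PE PF1 PF2 PZorn.
Open Scope Z_scope.

Lemma sum_div {X} (M : Z) (f : X -> Z) l : (forall x, In x l -> (M | f x)) ->
  (M | fold_right (fun x acc => f x + acc) 0 l).
Proof. induction l; simpl; intros H. apply Z.divide_0_r. apply Z.divide_add_r; auto. Qed.

Lemma fold_right_map' {X Y B} (f : Y -> B -> B) (g : X -> Y) a l :
  fold_right f a (map g l) = fold_right (fun x acc => f (g x) acc) a l.
Proof. induction l; simpl; auto. now rewrite IHl. Qed.

Section Bdd.
Variable G : Group.
Variables I J : Type.
Variable w : I -> word G J.
Variable p : nat.
Hypothesis Hp : prime (Z.of_nat p).
Hypothesis Hns : p_nonsingular p w.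

Local Notation E := (E G I J w).
Definition T := (I + J)%type.
Definition F (t : T) (j : J) : Z := match t with inl i => E i j | inr k => if dec k j then 1 else 0 end.
Definition adm (J' : J -> Prop) (t : T) : Prop := match t with inl _ => True | inr k => J' k end.
Definition fsum (cf : T -> Z) (s : list T) (j : J) := fold_right (fun t acc => cf t * F t j + acc) 0 s.
Definition Indep (M : Z) (J' : J -> Prop) := forall s : list T, NoDup s -> (forall t, In t s -> adm J' t) ->
  forall cf : T -> Z, (forall j, (M | fsum cf s j)) -> forall t, In t s -> (M | cf t).

Lemma indep_empty : Indep (Z.of_nat p) (fun _ => False).
Proof.
  intros s Hs Hadm cf Hsum.
  assert (Hconv : exists s', s = map inl s').
  { clear Hs Hsum. induction s as [|[i|k] s IH]. exists []. reflexivity.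
    destruct IH as [s' ->]. intros; apply Hadm; simpl; auto. exists (i :: s'). reflexivity.
    exfalso. apply (Hadm (inr k)). simpl; auto. }
  destruct Hconv as [s' ->].
  assert (Hs' : NoDup s') by (eapply NoDup_map_inv; eauto).
  intros t Ht. apply in_map_iff in Ht. destruct Ht as [i [<- Hi]].
  apply (Hns s' (fun i => cf (inl i)) Hs'); auto.
  intros j. specialize (Hsum j). unfold fsum in Hsum. rewrite fold_right_map' in Hsum. exact Hsum.
Qed.

Lemma indep_mono M (J1 J2 : J -> Prop) : (forall k, J1 k -> J2 k) -> Indep M J2 -> Indep M J1.
Proof.
  intros H12 H s Hs Hadm. apply H; auto. intros t Ht. specialize (Hadm t Ht). destruct t; simpl in *; auto.
Qed.

Lemma indep_chain : forall Fm : (J -> Prop) -> Prop, (forall X, Fm X -> Indep (Z.of_nat p) X) ->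
     (forall X Y, Fm X -> Fm Y -> (forall t, X t -> Y t) \/ (forall t, Y t -> X t)) ->
     Indep (Z.of_nat p) (fun a => exists2 X, Fm X & X a).
Proof.
  intros Fm HF Htot s Hs Hadm.
  assert (Hfin : forall s, (forall t, In t s -> adm (fun a => exists2 X, Fm X & X a) t) ->
     (exists2 X, Fm X & forall t, In t s -> adm X t) \/ (forall t, In t s -> adm (fun _ => False) t)).
  { clear s Hs Hadm. induction s as [|t s IH]; intros Ha.
    - right. intros t [].
    - destruct IH as [[X HX HXs]|Hn]. intros; apply Ha; simpl; auto.
      + destruct t as [i|k].
        * left. exists X; auto. intros t [<-|Ht]; simpl; auto.
        * destruct (Ha (inr k)) as [X' HX' HX'k]. simpl; auto.
          destruct (Htot X X' HX HX') as [H|H].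
          -- left. exists X'; auto. intros t [<-|Ht]; simpl; auto. specialize (HXs t Ht). destruct t; simpl in *; auto.
          -- left. exists X; auto. intros t [<-|Ht]; simpl; auto.
      + destruct t as [i|k].
        * right. intros t [<-|Ht]; simpl; auto.
        * destruct (Ha (inr k)) as [X' HX' HX'k]. simpl; auto.
          left. exists X'; auto. intros t [<-|Ht]; simpl; auto. specialize (Hn t Ht). destruct t; simpl in *; auto. contradiction. }
  destruct (Hfin s Hadm) as [[X HX HXs]|Hn].
  - apply (HF X HX); auto.
  - apply indep_empty; auto.
Qed.

Lemma indep_pow (J' : J -> Prop) : Indep (Z.of_nat p) J' -> forall a, Indep (Z.of_nat (Nat.pow p a)) J'.
Proof.
  intros H1. assert (Hp1 : 1 < Z.of_nat p) by (destruct Hp; lia).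
  induction a as [|a IH]; intros s Hs Hadm cf Hsum t Ht.
  - simpl. apply Z.divide_1_l.
  - assert (Hdp : forall t, In t s -> (Z.of_nat p | cf t)).
    { apply H1; auto. intros j. eapply Z.divide_trans; [|apply Hsum]. simpl. rewrite Nat2Z.inj_mul.
      apply Z.divide_mul_l. apply Z.divide_refl. }
    set (cf' := fun t => cf t / Z.of_nat p).
    assert (Hcf : forall t, In t s -> cf t = Z.of_nat p * cf' t).
    { intros t' Ht'. unfold cf'. destruct (Hdp t' Ht') as [k Hk]. rewrite Hk, Z.div_mul by lia. lia. }
    assert (Hsum' : forall j, (Z.of_nat (Nat.pow p a) | fsum cf' s j)).
    { intros j. specialize (Hsum j). unfold fsum in *. rewrite (fold_scaleZ s cf cf' _ _ Hcf) in Hsum.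
      simpl in Hsum. rewrite Nat2Z.inj_mul in Hsum. apply Z.mul_divide_cancel_l in Hsum; auto. lia. }
    rewrite (Hcf t Ht). simpl. rewrite Nat2Z.inj_mul. apply Z.mul_divide_mono_l. apply (IH s Hs Hadm cf'); auto.
Qed.

Definition sumZ {X} (f : X -> Z) (l : list X) := fold_right (fun x acc => f x + acc) 0 l.
Lemma sumZ_cons {X} (f : X -> Z) x l : sumZ f (x :: l) = f x + sumZ f l. Proof. reflexivity. Qed.
Lemma sumZ_nil {X} (f : X -> Z) : sumZ f [] = 0. Proof. reflexivity. Qed.
Lemma sumZ_app {X} (f : X -> Z) l1 l2 : sumZ f (l1 ++ l2) = sumZ f l1 + sumZ f l2.
Proof. induction l1; simpl app; rewrite ?sumZ_cons, ?sumZ_nil; auto. rewrite IHl1. lia. Qed.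
Lemma sumZ_ext {X} (f g : X -> Z) l : (forall x, In x l -> f x = g x) -> sumZ f l = sumZ g l.
Proof. induction l; intros H; rewrite ?sumZ_cons, ?sumZ_nil; auto. rewrite H, IHl; simpl; auto. intros; apply H; simpl; auto. Qed.
Lemma sumZ_add {X} (f g : X -> Z) l : sumZ (fun x => f x + g x) l = sumZ f l + sumZ g l.
Proof. induction l; rewrite ?sumZ_cons, ?sumZ_nil; auto. rewrite IHl. lia. Qed.
Lemma sumZ_mulc {X} (f : X -> Z) k l : sumZ (fun x => k * f x) l = k * sumZ f l.
Proof. induction l; rewrite ?sumZ_cons, ?sumZ_nil; auto. lia. rewrite IHl. lia. Qed.
Lemma sumZ_map {X Y} (f : Y -> Z) (g : X -> Y) l : sumZ f (map g l) = sumZ (fun x => f (g x)) l.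
Proof. induction l; simpl map; rewrite ?sumZ_cons, ?sumZ_nil; auto. now rewrite IHl. Qed.
Lemma sumZ_concat {X Y} (f : Y -> Z) (g : X -> list Y) l :
  sumZ f (concat (map g l)) = sumZ (fun x => sumZ f (g x)) l.
Proof. induction l; simpl map; simpl concat; rewrite ?sumZ_cons, ?sumZ_nil; auto. rewrite sumZ_app, IHl. reflexivity. Qed.
Lemma sumZ_zero {X} (f : X -> Z) l : (forall x, In x l -> f x = 0) -> sumZ f l = 0.
Proof. induction l; intros H; rewrite ?sumZ_cons, ?sumZ_nil; auto. rewrite H, IHl; simpl; auto. intros; apply H; simpl; auto. Qed.
Lemma sumZ_single {X} (f : X -> Z) (s : list X) x0 :
  NoDup s -> In x0 s -> sumZ (fun x => if dec x0 x then f x else 0) s = f x0.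
Proof.
  induction s as [|x s IH]; intros Hn Hin; [destruct Hin|].
  inversion Hn as [|? ? Hx Hs]; subst. rewrite sumZ_cons.
  destruct (dec x0 x) as [->|Hne].
  - rewrite (sumZ_zero _ s). lia. intros y Hy. destruct (dec x y); auto. subst. contradiction.
  - destruct Hin as [->|Hin]. contradiction. rewrite IH; auto.
Qed.
Lemma sumZ_div {X} (M : Z) (f : X -> Z) l : (forall x, In x l -> (M | f x)) -> (M | sumZ f l).
Proof. apply sum_div. Qed.

Definition delta (a b : J) : Z := if dec a b then 1 else 0.
Lemma delta_sym a b : delta a b = delta b a.
Proof. unfold delta. destruct (dec a b), (dec b a); subst; auto; contradiction. Qed.
Definition comb (l : list (T * Z)) (j : J) : Z := sumZ (fun pn => snd pn * F (fst pn) j) l.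
Lemma fsum_sumZ cf s j : fsum cf s j = sumZ (fun t => cf t * F t j) s.
Proof. reflexivity. Qed.

Lemma fsum_remove cf s x j : NoDup s -> In x s ->
  fsum cf s j = cf x * F x j + fsum cf (filter (fun t => if dec t x then false else true) s) j.
Proof.
  induction s as [|y s IH]; simpl; intros Hn Hin. contradiction.
  inversion Hn as [|? ? Hy Hs]; subst.
  destruct (dec y x) as [->|Hne].
  - f_equal. assert (E : filter (fun t => if dec t x then false else true) s = s).
    { clear IH Hn Hin Hs. induction s as [|z s IHs]; simpl; auto.
      destruct (dec z x) as [->|Hz]. exfalso; apply Hy; simpl; auto. rewrite IHs; auto. intros H; apply Hy; simpl; auto. }
    now rewrite E.
  - destruct Hin as [->|Hin]. contradiction. simpl. rewrite IH; auto. lia.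
Qed.

Section Max.
Variable J' : J -> Prop.
Hypothesis HJ' : Indep (Z.of_nat p) J'.
Hypothesis Hmax : forall B, (forall k, J' k -> B k) -> ~ (forall k, B k -> J' k) -> ~ Indep (Z.of_nat p) B.

Lemma span_p (j : J) : exists l : list (T * Z), (forall pn, In pn l -> adm J' (fst pn)) /\
  forall j3, (Z.of_nat p | delta j j3 - comb l j3).
Proof.
  destruct (classic (J' j)) as [Hj|Hj].
  { exists [(inr j, 1)]. split. intros pn [<-|[]]. simpl; auto.
    intros j3. unfold comb, sumZ. simpl. unfold delta. replace (_ - _) with 0 by (destruct (dec j j3); lia). apply Z.divide_0_r. }
  apply NNPP. intros Hno.
  apply (Hmax (fun k => J' k \/ k = j)). intros; auto. intros H. apply Hj. apply (H j). right. reflexivity.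
  intros s Hs Hadm cf Hsum t Ht.
  set (s' := filter (fun t => if dec t (inr j) then false else true) s).
  assert (Hs' : NoDup s') by (apply NoDup_filter; auto).
  assert (Hadm' : forall t, In t s' -> adm J' t).
  { intros t' Ht'. unfold s' in Ht'. apply filter_In in Ht'. destruct Ht' as [Ht' Hf].
    specialize (Hadm t' Ht'). destruct t' as [i|k]; simpl in *; auto.
    destruct Hadm as [Hk| ->]; auto. destruct (dec (@inr I J j) (inr j)); [discriminate|contradiction]. }
  destruct (classic (In (inr j) s)) as [Hin|Hnin].
  2:{ apply HJ' with s; auto. intros t' Ht'. specialize (Hadm t' Ht'). destruct t' as [i|k]; simpl in *; auto.
      destruct Hadm as [Hk| ->]; auto. contradiction. }
  assert (Hrem : forall j3, fsum cf s j3 = cf (inr j) * delta j j3 + fsum cf s' j3).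
  { intros j3. apply fsum_remove; auto. }
  assert (Hint : forall t', In t' s -> t' = inr j \/ In t' s').
  { intros t' Ht'. destruct (dec t' (inr j)) as [e|ne]. left; exact e. right. apply filter_In. split; auto.
    unfold dec. destruct excluded_middle_informative; [contradiction|reflexivity]. }
  destruct (classic (Z.of_nat p | cf (inr j))) as [Hdj|Hndj].
  - destruct (Hint t Ht) as [->|Ht']; auto. apply HJ' with s'; auto.
    intros j3. specialize (Hsum j3). rewrite Hrem in Hsum.
    apply (Z.divide_add_cancel_r _ (cf (inr j) * delta j j3)); auto. apply Z.divide_mul_l; auto.
  - exfalso. apply Hno.
    destruct (rel_prime_bezout _ _ (prime_rel_prime _ Hp _ Hndj)) as [u g' Hb].
    exists (map (fun t => (t, - g' * cf t)) s'). split.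
    + intros pn Hpn. apply in_map_iff in Hpn. destruct Hpn as [t' [<- Ht']]. simpl. auto.
    + intros j3. unfold comb. rewrite sumZ_map. simpl.
      rewrite (sumZ_ext _ (fun t => - g' * (cf t * F t j3))) by (intros; lia).
      rewrite sumZ_mulc, <- fsum_sumZ.
      specialize (Hsum j3). rewrite Hrem in Hsum.
      replace (delta j j3 - - g' * fsum cf s' j3) with ((u * Z.of_nat p) * delta j j3 + g' * (cf (inr j) * delta j j3 + fsum cf s' j3)).
      2:{ transitivity ((u * Z.of_nat p + g' * cf (inr j)) * delta j j3 + g' * fsum cf s' j3). ring.
          rewrite Hb. ring. }
      apply Z.divide_add_r. apply Z.divide_mul_l. apply Z.divide_mul_r. apply Z.divide_refl.
      apply Z.divide_mul_r. auto.
Qed.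
End Max.
End Bdd.

End PF4.

Module PF5.
Import PD PE PF1 PF2 PF4 PZorn.
Open Scope Z_scope.

Section Lift.
Variable G : Group.
Variables I J : Type.
Variable w : I -> word G J.
Variable p : nat.
Hypothesis Hp : prime (Z.of_nat p).
Hypothesis Hns : p_nonsingular p w.
Local Notation T := (T I J).
Local Notation F := (F G I J w).
Local Notation comb := (comb G I J w).
Local Notation delta := (delta J).
Local Notation adm := (adm I J).

Definition suppF (t : T) : list J := match t with inl i => vars G J (w i) | inr k => [k] end.
Lemma F_notin t j : ~ In j (suppF t) -> F t j = 0.
Proof.
  destruct t as [i|k]; simpl; intros H.
  - unfold E. apply exp_sum_notin. exact H.
  - unfold dec. destruct excluded_middle_informative; auto. subst. tauto.
Qed.
Lemma comb_app l1 l2 j : comb (l1 ++ l2) j = comb l1 j + comb l2 j.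
Proof. unfold comb. apply sumZ_app. Qed.
Lemma comb_scale k l j : comb (map (fun pn => (fst pn, k * snd pn)) l) j = k * comb l j.
Proof. unfold comb. rewrite sumZ_map. simpl. rewrite <- sumZ_mulc. apply sumZ_ext. intros. lia. Qed.

Variable J' : J -> Prop.
Hypothesis HJ' : Indep G I J w (Z.of_nat p) J'.
Hypothesis Hmax : forall B, (forall k, J' k -> B k) -> ~ (forall k, B k -> J' k) -> ~ Indep G I J w (Z.of_nat p) B.

Lemma lift a : forall j, exists l : list (T * Z), (forall pn, In pn l -> adm J' (fst pn)) /\
  forall j3, (Z.of_nat (Nat.pow p a) | delta j j3 - comb l j3).
Proof.
  assert (Hp1 : 1 < Z.of_nat p) by (destruct Hp; lia).
  induction a as [|a IH]; intros j.
  - exists []. split. intros _ []. intros. simpl. apply Z.divide_1_l.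
  - destruct (IH j) as [l [Hadm Hdiv]].
    set (sp := fun j'' => proj1_sig (constructive_indefinite_description _ (span_p G I J w p Hp J' HJ' Hmax j''))).
    assert (Hsp : forall j'', (forall pn, In pn (sp j'') -> adm J' (fst pn)) /\
                  forall j3, (Z.of_nat p | delta j'' j3 - comb (sp j'') j3)).
    { intros j''. unfold sp. destruct constructive_indefinite_description. simpl. auto. }
    set (P := Z.of_nat (Nat.pow p a)).
    assert (HP : 0 < P) by (unfold P; pose proof (Nat.pow_nonzero p a); lia).
    set (L := nodup dec (j :: concat (map (fun pn => suppF (fst pn)) l))).
    set (R := fun j3 => (delta j j3 - comb l j3) / P).
    assert (HR : forall j3, delta j j3 - comb l j3 = P * R j3).
    { intros j3. unfold R. destruct (Hdiv j3) as [k Hk]. fold P in Hk. rewrite Hk, Z.div_mul by lia. lia. }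
    assert (HR0 : forall j3, ~ In j3 L -> R j3 = 0).
    { intros j3 Hj3. unfold R.
      assert (E1 : delta j j3 = 0).
      { unfold delta. destruct (dec j j3) as [->|]; auto. exfalso. apply Hj3. apply nodup_In. simpl; auto. }
      assert (E2 : comb l j3 = 0).
      { unfold comb. apply sumZ_zero. intros pn Hpn. rewrite F_notin. lia. intros Hin. apply Hj3.
        apply nodup_In. right. apply in_concat. exists (suppF (fst pn)). split; auto. apply in_map_iff. eauto. }
      rewrite E1, E2. reflexivity. }
    assert (HLn : NoDup L) by apply NoDup_nodup.
    exists (l ++ concat (map (fun j'' => map (fun pn => (fst pn, P * R j'' * snd pn)) (sp j'')) L)).
    split.
    + intros pn Hpn. apply in_app_iff in Hpn. destruct Hpn as [Hpn|Hpn]; auto.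
      apply in_concat in Hpn. destruct Hpn as [x [Hx Hpn]]. apply in_map_iff in Hx. destruct Hx as [j'' [<- _]].
      apply in_map_iff in Hpn. destruct Hpn as [pn' [<- Hpn']]. simpl. apply (proj1 (Hsp j'')); auto.
    + intros j3. rewrite comb_app. unfold comb at 2. rewrite sumZ_concat. fold comb.
      rewrite (sumZ_ext _ (fun j'' => P * R j'' * comb (sp j'') j3)).
      2:{ intros j'' _. rewrite <- comb_scale. reflexivity. }
      assert (HRs : R j3 = sumZ (fun j'' => R j'' * delta j'' j3) L).
      { destruct (classic (In j3 L)) as [Hin|Hnin].
        - rewrite <- (sumZ_single R L j3 HLn Hin) at 1. apply sumZ_ext. intros x _. unfold delta.
          destruct (dec j3 x), (dec x j3); subst; try lia; contradiction.
        - rewrite HR0 by auto. symmetry. apply sumZ_zero. intros x Hx. unfold delta.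
          destruct (dec x j3); subst; try lia; contradiction. }
      replace (delta j j3 - (comb l j3 + sumZ (fun j'' => P * R j'' * comb (sp j'') j3) L))
        with (P * sumZ (fun j'' => R j'' * (delta j'' j3 - comb (sp j'') j3)) L).
      2:{ assert (Hd := HR j3). rewrite HRs in Hd.
          rewrite (sumZ_ext _ (fun j'' => R j'' * delta j'' j3 + (- (R j'' * comb (sp j'') j3)))) by (intros; lia).
          rewrite sumZ_add. rewrite (sumZ_ext (fun j'' => - (R j'' * comb (sp j'') j3)) (fun j'' => -1 * (R j'' * comb (sp j'') j3))) by (intros; lia).
          rewrite sumZ_mulc.
          rewrite (sumZ_ext (fun j'' => P * R j'' * comb (sp j'') j3) (fun j'' => P * (R j'' * comb (sp j'') j3))) by (intros; lia).
          rewrite sumZ_mulc. lia. }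
      simpl. rewrite Nat2Z.inj_mul. fold P. rewrite (Z.mul_comm (Z.of_nat p) P). apply Z.mul_divide_mono_l.
      apply sumZ_div. intros j'' _. apply Z.divide_mul_r. apply (proj2 (Hsp j'')).
Qed.
End Lift.

End PF5.

Module PF6.
Import PD PE PF1 PF2 PF4 PF5 PZorn.
Open Scope Z_scope.

Section BddThm.
Variable G : Group.
Variables I J : Type.
Variable w : I -> word G J.
Variable p : nat.
Hypothesis Hp : prime (Z.of_nat p).
Hypothesis Hns : p_nonsingular p w.
Variable A : AbG.
Variable v : nat.
Hypothesis Hq : forall a : A, natmul (Nat.pow p v) a = azero.
Variable c : I -> A.
Local Notation T := (T I J).
Local Notation F := (F G I J w).
Local Notation comb := (comb G I J w).
Local Notation delta := (delta J).
Local Notation adm := (adm I J).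
Local Notation E := (E G I J w).

Theorem bdd : exists z : J -> A, forall i, lin (w i) z = c i.
Proof.
  destruct (zorn_sets J (Indep G I J w (Z.of_nat p)) (indep_chain G I J w p Hns)) as [J' [HJ' Hmax]].
  set (q := Z.of_nat (Nat.pow p v)).
  pose proof (indep_pow G I J w p Hp J' HJ' v) as Hq'. fold q in Hq'.
  set (lj := fun j => proj1_sig (constructive_indefinite_description _ (lift G I J w p Hp J' HJ' Hmax v j))).
  assert (Hlj : forall j, (forall pn, In pn (lj j) -> adm J' (fst pn)) /\ forall j3, (q | delta j j3 - comb (lj j) j3)).
  { intros j. unfold lj. destruct constructive_indefinite_description. simpl. auto. }
  set (cval := fun t : T => match t with inl k => c k | inr _ => azero end).
  exists (fun j => lsum (fun pn => zact (snd pn) (cval (fst pn))) (lj j)).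
  intros i.
  set (L := nodup dec (vars G J (w i))).
  assert (HL : NoDup L) by apply NoDup_nodup.
  rewrite (lin_rep G J A (w i) _ L HL) by (intros; apply nodup_In; auto).
  set (m := concat (map (fun j => map (fun pn => (fst pn, E i j * snd pn)) (lj j)) L) ++ [(inl i, -1)]).
  assert (Hm : lsum (fun pn => zact (snd pn) (cval (fst pn))) m =
               aadd (lsum (fun j => zact (exp_sum (w i) j) (lsum (fun pn => zact (snd pn) (cval (fst pn))) (lj j))) L) (aopp (c i))).
  { unfold m. rewrite lsum_app, lsum_concat. simpl. rewrite add0r. f_equal.
    - apply lsum_ext. intros j _. rewrite lsum_map. simpl. rewrite <- lsum_zact. apply lsum_ext. intros. apply zact_mul.
    - f_equal. apply add0r. }
  apply sub_eq0. rewrite <- Hm.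
  set (s := nodup dec (map fst m)).
  assert (Hs : NoDup s) by apply NoDup_nodup.
  assert (Hin : forall pn, In pn m -> In (fst pn) s) by (intros pn H; apply nodup_In, in_map; auto).
  rewrite (agg A T cval m s Hs Hin).
  apply lsum_zero. intros t Ht.
  assert (Hadm_m : forall pn, In pn m -> adm J' (fst pn)).
  { intros pn Hpn. unfold m in Hpn. apply in_app_iff in Hpn. destruct Hpn as [Hpn|[<-|[]]]; simpl; auto.
    apply in_concat in Hpn. destruct Hpn as [x [Hx Hpn]]. apply in_map_iff in Hx. destruct Hx as [j [<- _]].
    apply in_map_iff in Hpn. destruct Hpn as [pn' [<- Hpn']]. simpl. apply (proj1 (Hlj j)); auto. }
  assert (Hdq : (q | coef T m t)).
  { apply (Hq' s Hs); auto.
    - intros t' Ht'. apply nodup_In in Ht'. apply in_map_iff in Ht'. destruct Ht' as [pn [<- Hpn]]. auto.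
    - intros j3. unfold fsum.
      assert (Hc : fold_right (fun t0 acc => coef T m t0 * F t0 j3 + acc) 0 s = comb m j3).
      { transitivity (@lsum Zab T (fun t0 => coef T m t0 * F t0 j3) s). symmetry. apply lsumZ.
        transitivity (@lsum Zab (T * Z) (fun pn => snd pn * F (fst pn) j3) m). 2: apply lsumZ.
        rewrite (lsum_ext Zab (fun pn => snd pn * F (fst pn) j3) (fun pn => @zact Zab (snd pn) (F (fst pn) j3))) by (intros; symmetry; apply zact_Z).
        rewrite (agg Zab T (fun t0 => F t0 j3) m s Hs Hin). apply (lsum_ext Zab). intros. symmetry. apply zact_Z. }
      rewrite Hc.
      assert (HE : E i j3 = sumZ (fun j => E i j * delta j j3) L).
      { destruct (classic (In j3 L)) as [HinL|HninL].
        - rewrite <- (sumZ_single (fun x => E i x) L j3 HL HinL) at 1. apply sumZ_ext. intros x _. unfold delta.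
          destruct (dec j3 x), (dec x j3); subst; try lia; contradiction.
        - unfold E at 1. rewrite exp_sum_notin. symmetry. apply sumZ_zero. intros x Hx. unfold delta.
          destruct (dec x j3); subst; try lia; contradiction.
          intros H. apply HninL. apply nodup_In. auto. }
      assert (Hcm : comb m j3 = sumZ (fun j => E i j * (comb (lj j) j3 - delta j j3)) L).
      { unfold m. rewrite comb_app. unfold comb at 1. rewrite sumZ_concat. fold comb.
        rewrite (sumZ_ext _ (fun j => E i j * comb (lj j) j3)) by (intros; apply comb_scale).
        unfold comb at 2. rewrite sumZ_cons, sumZ_nil. cbn [fst snd]. change (F (inl i) j3) with (E i j3). rewrite HE.
        rewrite (sumZ_ext (fun j => E i j * (comb (lj j) j3 - delta j j3)) (fun j => E i j * comb (lj j) j3 + (-1) * (E i j * delta j j3))) by (intros; lia).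
        rewrite sumZ_add, sumZ_mulc. lia. }
      rewrite Hcm. apply sumZ_div. intros j _. apply Z.divide_mul_r.
      replace (comb (lj j) j3 - delta j j3) with (- (delta j j3 - comb (lj j) j3)) by lia.
      apply Z.divide_opp_r. apply (proj2 (Hlj j)).
  }
  destruct Hdq as [k Hk]. rewrite Hk, zact_mul. unfold q. rewrite zact_nat, Hq. apply zactx0.
Qed.
End BddThm.

End PF6.

Import PA PB PC PD PE PF1 PF2 PF3 PF4 PF5 PF6.

Lemma Yser_monoN (G : Group) (N N' : G -> Prop) k x : (forall y, N y -> N' y) -> Yser G N k x -> Yser G N' k x.
Proof. intros H. revert x. induction k; simpl; auto. Qed.

Theorem lemma4 (p : nat) (G : Group) :
  prime (Z.of_nat p) ->
  nilpotent G -> p_group p G -> first_Ulm_factor_bounded p G ->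
  forall (I J : Type) (w : I -> word G J),
    p_nonsingular p w -> has_solution w.
Proof.
  intros Hp [c Hc] Hpg [m [Hm1 Hm']] I J w Hns.
  assert (Hnil : forall x : G, Yser G (triv G) c x).
  { intros x. apply Yser_fold. intros ys Hl. apply Hc. exact Hl. }
  assert (Hm : forall x : G, H0 p G (gpow x m)) by (intros x; apply inf_H0, Hm').
  set (N0 := H0 p G).
  assert (HN0 : nsub G N0) by (apply (H0_nsub p G Hp Hpg c Hnil m Hm1 Hm)).
  destruct (H0_ppow p G Hp Hpg m Hm1 Hm) as [v Hv].
  assert (Hstep : forall t, (t <= c)%nat -> exists a : J -> G, forall i, Yser G N0 (c - t) (eval_word a (w i))).
  { induction t as [|t IH]; intros Ht.
    - exists (fun _ => gone). intros i. rewrite Nat.sub_0_r. apply (Yser_monoN G (triv G)).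
      intros y ->. apply (N1 G N0 HN0). apply Hnil.
    - destruct (IH ltac:(lia)) as [a Ha].
      set (k := (c - S t)%nat). assert (Ek : (c - t = S k)%nat) by (unfold k; lia).
      rewrite Ek in Ha.
      pose proof (Yser_nsub G N0 k HN0) as HN.
      pose proof (Yser_nsub G N0 (S k) HN0) as HS.
      destruct HS as [HS1 [HSM [HSV _]]].
      assert (HNS : forall x, Yser G N0 k x -> Yser G N0 (S k) x) by (intros; apply Yser_S; auto).
      assert (HSc : forall z, Yser G N0 (S k) z -> cen G (Yser G N0 k) z) by (intros; apply Yser_cen; auto).
      apply (corr G (Yser G N0 k) (Yser G N0 (S k)) HN HS1 HSM HSV HNS HSc w a Ha).
      intros cc. apply (bdd G I J w p Hp Hns _ v). intros q.
      destruct (pi_surj G _ _ HN HS1 HSM HSV HNS HSc q) as [x [Hx <-]].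
      rewrite pi_pow by auto. apply pi_ker.
      + assert (Hpw : forall n, Yser G N0 (S k) (gpow x n)) by (induction n; [exact HS1 | apply HSM; auto]).
        apply Hpw.
      + apply Yser_0; [exact HN0 | apply Hv]. }
  destruct (Hstep c (le_n c)) as [a Ha]. rewrite Nat.sub_diag in Ha. simpl in Ha.
  destruct HN0 as [HS1 [HSM [HSV HSC]]].
  assert (HNS : forall x, triv G x -> N0 x) by (intros x ->; auto).
  assert (HSc : forall z, N0 z -> cen G (triv G) z).
  { intros z Hz g. unfold cong, triv. rewrite (H0_central p G Hpg c Hnil z Hz g). gsolve. }
  destruct (corr G (triv G) N0 (triv_nsub G) HS1 HSM HSV HNS HSc w a Ha) as [a' Ha'].
  - intros cc. apply (baer G I J w p Hp Hns). intros q d Hd.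
    destruct (pi_surj G _ _ (triv_nsub G) HS1 HSM HSV HNS HSc q) as [x [Hx <-]].
    destruct (H0_div p G Hp Hpg m Hm1 Hm x d Hx Hd) as [y [Hy <-]].
    exists (pi G _ _ (triv_nsub G) HS1 HSM HSV HNS HSc y). apply pi_pow. exact Hy.
  - exists a'. exact Ha'.
Qed.
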